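(* Let $\kappa,\tau\in\mathbb{R}$ with $\tau\neq 0$ and $\kappa-4\tau^2\neq 0$. Then there exists no totally umbilic surface, complete or not (i.e. not even a small immersed piece of surface), in $\mathbb{M}^3(\kappa,\tau)$. In particular $\mathbb{M}^3(\kappa,\tau)$ contains no totally geodesic surface.
   Context: For $\kappa\in\mathbb{R}$, $\mathbb{M}^2(\kappa)$ denotes the complete simply connected surface of constant curvature $\kappa$. For $\kappa\in\mathbb{R}$ and $\tau\in\mathbb{R}$, $\mathbb{M}^3(\kappa,\tau)$ denotes the connected, simply connected homogeneous Riemannian 3-manifold which is a Riemannian submersion $\mathbb{M}^3(\kappa,\tau)\to\mathbb{M}^2(\kappa)$ with geodesic fibers, whose unit vertical field $\xi$ (tangent to the fibers) is a Killing field satisfying $\overline\nabla_X\xi=\tau\,(X\wedge\xi)$ for every tangent vector $X$, where $\overline\nabla$ is the Levi-Civita connection and $\wedge$ the cross product. For $\tau\neq0$ and $\kappa-4\tau^2\ne0$ these are the Berger spheres ($\kappa>0$), the spaces with the isometry group of the Heisenberg group $\mathrm{Nil}_3$ ($\kappa=0$), and the spaces with the isometry group of $\widetilde{\mathrm{PSL}_2(\mathbb{R})}$ ($\kappa<0$). A surface (immersed, of class $C^3$) is totally umbilic if at each point its shape operator is a multiple of the identity, i.e. $\overline\nabla_wN=\lambda w$ for all tangent $w$, for some function $\lambda$ and a local unit normal $N$; totally geodesic means $\lambda\equiv0$. *)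

(* Defs.v *)
From Stdlib Require Import Reals.
From Coquelicot Require Import Coquelicot.
Open Scope R_scope.

(* Points of R^3 in coordinates (x,y,z) = (p 0, p 1, p 2). *)
Definition pt := nat -> R.

Definition upd (p : pt) (k : nat) (t : R) : pt :=
  fun i => if Nat.eqb i k then t else p i.

Definition sum3 (F : nat -> R) : R := F 0%nat + F 1%nat + F 2%nat.

(* Standard coordinate model of M^3(kappa,tau) (Daniel):
   domain  Omega = { p | 1 + kappa/4 (x^2+y^2) > 0 },
   lam = 1/(1 + kappa/4 (x^2+y^2)),
   ds^2 = lam^2 (dx^2 + dy^2) + (dz + tau lam (y dx - x dy))^2. *)
Definition in_model (kappa : R) (p : pt) : Prop :=
  1 + kappa / 4 * (p 0%nat ^ 2 + p 1%nat ^ 2) > 0.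

Definition lamM (kappa : R) (p : pt) : R :=
  / (1 + kappa / 4 * (p 0%nat ^ 2 + p 1%nat ^ 2)).

Definition gM (kappa tau : R) (i j : nat) (p : pt) : R :=
  let l := lamM kappa p in
  let x := p 0%nat in let y := p 1%nat in
  match i, j with
  | 0%nat, 0%nat => l ^ 2 + tau ^ 2 * l ^ 2 * y ^ 2
  | 1%nat, 1%nat => l ^ 2 + tau ^ 2 * l ^ 2 * x ^ 2
  | 2%nat, 2%nat => 1
  | 0%nat, 1%nat | 1%nat, 0%nat => - (tau ^ 2 * l ^ 2 * x * y)
  | 0%nat, 2%nat | 2%nat, 0%nat => tau * l * y
  | 1%nat, 2%nat | 2%nat, 1%nat => - (tau * l * x)
  | _, _ => 0
  end.

Definition dgM (kappa tau : R) (l i j : nat) (p : pt) : R :=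
  Derive (fun t => gM kappa tau i j (upd p l t)) (p l).

(* Christoffel symbols of the first kind:
   Gamma_{ij,k} = 1/2 (d_i g_jk + d_j g_ik - d_k g_ij) = g(nabla_{d_i} d_j, d_k) *)
Definition Gamma1 (kappa tau : R) (i j k : nat) (p : pt) : R :=
  / 2 * (dgM kappa tau i j k p + dgM kappa tau j i k p - dgM kappa tau k i j p).

Definition gdot (kappa tau : R) (p : pt) (v w : pt) : R :=
  sum3 (fun i => sum3 (fun j => gM kappa tau i j p * v i * w j)).

Definition du (h : R * R -> R) (q : R * R) : R := Derive (fun t => h (t, snd q)) (fst q).
Definition dv (h : R * R -> R) (q : R * R) : R := Derive (fun t => h (fst q, t)) (snd q).

Definition fu (f : R * R -> pt) (q : R * R) : pt := fun i => du (fun q' => f q' i) q.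
Definition fv (f : R * R -> pt) (q : R * R) : pt := fun i => dv (fun q' => f q' i) q.

Fixpoint Ck (n : nat) (U : R * R -> Prop) (h : R * R -> R) : Prop :=
  match n with
  | O => forall q, U q -> continuous h q
  | S m =>
      (forall q, U q -> continuous h q /\
                        ex_derive (fun t => h (t, snd q)) (fst q) /\
                        ex_derive (fun t => h (fst q, t)) (snd q)) /\
      Ck m U (du h) /\ Ck m U (dv h)
  end.

(* Euclidean cross product is nonzero <-> f_u, f_v linearly independent *)
Definition indep (a b : pt) : Prop :=
  a 1%nat * b 2%nat - a 2%nat * b 1%nat <> 0 \/
  a 2%nat * b 0%nat - a 0%nat * b 2%nat <> 0 \/
  a 0%nat * b 1%nat - a 1%nat * b 0%nat <> 0.

(* Lowered covariant derivative: g( nabla_{f_u} N , d_k ) (dir = true)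
   or g( nabla_{f_v} N , d_k ) (dir = false), at the parameter q. *)
Definition covN_low (kappa tau : R) (f N : R * R -> pt) (dir : bool) (q : R * R) (k : nat) : R :=
  let w := if dir then fu f q else fv f q in
  let dN := if dir then fu N q else fv N q in
  let p := f q in
  sum3 (fun j => gM kappa tau k j p * dN j) +
  sum3 (fun i => sum3 (fun j => Gamma1 kappa tau i j k p * w i * N q j)).

(* A C^3 immersed surface piece f : U -> M^3(kappa,tau) (U open nonempty in R^2),
   with a local unit normal N, which is totally umbilic with umbilicity function lam:
   nabla_w N = lam w for all tangent w (checked on the basis f_u, f_v, by linearity,
   and tested against the coordinate fields d_k, by nondegeneracy of g). *)
Definition totally_umbilic_surface (kappa tau : R) (U : R * R -> Prop)
  (f N : R * R -> pt) (lam : R * R -> R) : Prop :=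
  open U /\ (exists q, U q) /\
  (forall q, U q -> in_model kappa (f q)) /\
  (forall i, (i < 3)%nat -> Ck 3 U (fun q => f q i)) /\
  (forall q, U q -> indep (fu f q) (fv f q)) /\
  (forall q, U q ->
     gdot kappa tau (f q) (N q) (fu f q) = 0 /\
     gdot kappa tau (f q) (N q) (fv f q) = 0 /\
     gdot kappa tau (f q) (N q) (N q) = 1) /\
  (forall q i, U q -> (i < 3)%nat ->
     ex_derive (fun t => N (t, snd q) i) (fst q) /\
     ex_derive (fun t => N (fst q, t) i) (snd q)) /\
  (forall q k, U q -> (k < 3)%nat ->
     covN_low kappa tau f N true q k = lam q * gdot kappa tau (f q) (fu f q) (upd (fun _ => 0) k 1) /\
     covN_low kappa tau f N false q k = lam q * gdot kappa tau (f q) (fv f q) (upd (fun _ => 0) k 1)).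

Definition totally_geodesic_surface (kappa tau : R) (U : R * R -> Prop) (f N : R * R -> pt) : Prop :=
  totally_umbilic_surface kappa tau U f N (fun _ => 0).

(* Main.v *)
Require Import Defs.
From Stdlib Require Import Reals Lra Lia.
From Coquelicot Require Import Coquelicot.
Open Scope R_scope.

Definition Lm (k x y : R) : R := / (1 + k / 4 * (x ^ 2 + y ^ 2)).

Definition gE (k t : R) (i j : nat) (x y : R) : R :=
  let l := Lm k x y in
  match i, j with
  | 0%nat, 0%nat => l ^ 2 + t ^ 2 * l ^ 2 * y ^ 2
  | 1%nat, 1%nat => l ^ 2 + t ^ 2 * l ^ 2 * x ^ 2
  | 2%nat, 2%nat => 1
  | 0%nat, 1%nat | 1%nat, 0%nat => - (t ^ 2 * l ^ 2 * x * y)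
  | 0%nat, 2%nat | 2%nat, 0%nat => t * l * y
  | 1%nat, 2%nat | 2%nat, 1%nat => - (t * l * x)
  | _, _ => 0
  end.

Lemma gM_gE k t i j p : gM k t i j p = gE k t i j (p 0%nat) (p 1%nat).
Proof. reflexivity. Qed.

Definition dgE (k t : R) (l i j : nat) (x y : R) : R :=
  let L := Lm k x y in let Lx := -(k/2)*x*L^2 in let Ly := -(k/2)*y*L^2 in
  match l with
  | 0%nat => match i, j with
    | 0%nat, 0%nat => 2*L*Lx*(1+t^2*y^2)
    | 1%nat, 1%nat => 2*L*Lx*(1+t^2*x^2) + 2*t^2*L^2*x
    | 0%nat, 1%nat | 1%nat, 0%nat => -(t^2*(2*L*Lx*x*y + L^2*y))
    | 0%nat, 2%nat | 2%nat, 0%nat => t*Lx*y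
    | 1%nat, 2%nat | 2%nat, 1%nat => -(t*(Lx*x + L))
    | _, _ => 0 end
  | 1%nat => match i, j with
    | 0%nat, 0%nat => 2*L*Ly*(1+t^2*y^2) + 2*t^2*L^2*y
    | 1%nat, 1%nat => 2*L*Ly*(1+t^2*x^2)
    | 0%nat, 1%nat | 1%nat, 0%nat => -(t^2*(2*L*Ly*x*y + L^2*x))
    | 0%nat, 2%nat | 2%nat, 0%nat => t*(Ly*y + L)
    | 1%nat, 2%nat | 2%nat, 1%nat => -(t*Ly*x)
    | _, _ => 0 end
  | _ => 0 end.

Ltac dom_tac := repeat split; try exact I; try (simpl; nra).

Lemma dgE0_ok k t i j x y : 1 + k/4*(x^2+y^2) > 0 ->
  is_derive (fun s => gE k t i j s y) x (dgE k t 0 i j x y).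
Proof.
  intro H.
  assert (H' : 1 + k/4*(x*(x*1)+y*(y*1)) <> 0) by (simpl in H; lra).
  destruct i as [|[|[|i]]]; destruct j as [|[|[|j]]];
  unfold gE, dgE, Lm; simpl;
  first [ apply (is_derive_const (K:=R_AbsRing)) | auto_derive; [ repeat split; first [exact I | exact H'] | field; nra ] ].
Qed.

Lemma dgE1_ok k t i j x y : 1 + k/4*(x^2+y^2) > 0 ->
  is_derive (fun s => gE k t i j x s) y (dgE k t 1 i j x y).
Proof.
  intro H.
  assert (H' : 1 + k/4*(x*(x*1)+y*(y*1)) <> 0) by (simpl in H; lra).
  destruct i as [|[|[|i]]]; destruct j as [|[|[|j]]];
  unfold gE, dgE, Lm; simpl;
  first [ apply (is_derive_const (K:=R_AbsRing)) | auto_derive; [ repeat split; first [exact I | exact H'] | field; nra ] ].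
Qed.

Lemma dgM0 k t p (H : in_model k p) i j :
  dgM k t 0 i j p = dgE k t 0 i j (p 0%nat) (p 1%nat).
Proof.
  unfold dgM. apply is_derive_unique.
  eapply is_derive_ext; [|apply dgE0_ok; exact H]. intro s. reflexivity.
Qed.

Lemma dgM1 k t p (H : in_model k p) i j :
  dgM k t 1 i j p = dgE k t 1 i j (p 0%nat) (p 1%nat).
Proof.
  unfold dgM. apply is_derive_unique.
  eapply is_derive_ext; [|apply dgE1_ok; exact H]. intro s. reflexivity.
Qed.

Lemma dgM2 k t p i j : dgM k t 2 i j p = dgE k t 2 i j (p 0%nat) (p 1%nat).
Proof.
  unfold dgM. simpl.
  rewrite (Derive_ext _ (fun _ => gE k t i j (p 0%nat) (p 1%nat))).
  - apply Derive_const.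
  - intro s. reflexivity.
Qed.

Definition frv k t (p w : pt) : pt := fun c =>
  match c with
  | 0%nat => Lm k (p 0%nat) (p 1%nat) * w 0%nat
  | 1%nat => Lm k (p 0%nat) (p 1%nat) * w 1%nat
  | _ => w 2%nat + t * Lm k (p 0%nat) (p 1%nat) * (p 1%nat * w 0%nat - p 0%nat * w 1%nat)
  end.

Definition dfrv k t (p dp w dw : pt) : pt := fun c =>
  let L := Lm k (p 0%nat) (p 1%nat) in
  let dL := -(k/2)*L^2*(p 0%nat * dp 0%nat + p 1%nat * dp 1%nat) in
  match c with
  | 0%nat => dL * w 0%nat + L * dw 0%nat
  | 1%nat => dL * w 1%nat + L * dw 1%nat
  | _ => dw 2%nat + t*dL*(p 1%nat * w 0%nat - p 0%nat * w 1%nat)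
         + t*L*(dp 1%nat * w 0%nat + p 1%nat * dw 0%nat - dp 0%nat * w 1%nat - p 0%nat * dw 1%nat)
  end.

Definition rho k (p a : pt) : R := k/2*(p 0%nat * a 1%nat - p 1%nat * a 0%nat).

Definition Omv k t (p a Y : pt) : pt := fun c =>
  match c with
  | 0%nat => rho k p a * Y 1%nat + t*(a 1%nat * Y 2%nat + a 2%nat * Y 1%nat)
  | 1%nat => -(rho k p a * Y 0%nat) - t*(a 0%nat * Y 2%nat + a 2%nat * Y 0%nat)
  | _ => t*(a 0%nat * Y 1%nat - a 1%nat * Y 0%nat)
  end.

Definition omT k t (p E : pt) : pt := fun c =>
  let L := Lm k (p 0%nat) (p 1%nat) in
  match c with
  | 0%nat => L * E 0%nat + t * L * p 1%nat * E 2%nat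
  | 1%nat => L * E 1%nat - t * L * p 0%nat * E 2%nat
  | _ => E 2%nat
  end.

Definition dot3 (a b : pt) : R := a 0%nat * b 0%nat + a 1%nat * b 1%nat + a 2%nat * b 2%nat.

Lemma gdot_frame k t p v w : gdot k t p v w = dot3 (frv k t p v) (frv k t p w).
Proof. unfold gdot, sum3, dot3, frv. rewrite !gM_gE. unfold gE. simpl. ring. Qed.

Lemma conv_frame k t (p w n d : pt) (kk : nat) : in_model k p -> (kk < 3)%nat ->
  sum3 (fun j => gM k t kk j p * d j) +
  sum3 (fun i => sum3 (fun j => Gamma1 k t i j kk p * w i * n j))
  = omT k t p (fun c => dfrv k t p w n d c + Omv k t p (frv k t p w) (frv k t p n) c) kk.
Proof.
  intros H Hk.
  assert (H' : 4 + k*(p 0%nat * p 0%nat + p 1%nat * p 1%nat) > 0) by (unfold in_model in H; simpl in H; nra).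
  unfold sum3, Gamma1.
  destruct kk as [|[|[|kk]]]; try lia;
  rewrite ?(dgM0 k t p H), ?(dgM1 k t p H), ?dgM2;
  rewrite !gM_gE; unfold gE, dgE, omT, dfrv, Omv, frv, rho, Lm; simpl;
  field; nra.
Qed.

Lemma isd_plus (f g : R -> R) (x df dg : R) : is_derive f x df -> is_derive g x dg ->
  is_derive (fun s => f s + g s) x (df + dg).
Proof. intros; apply (is_derive_plus f g); auto. Qed.
Lemma isd_minus (f g : R -> R) (x df dg : R) : is_derive f x df -> is_derive g x dg ->
  is_derive (fun s => f s - g s) x (df - dg).
Proof. intros; apply (is_derive_minus f g); auto. Qed.
Lemma isd_mult (f g : R -> R) (x df dg : R) : is_derive f x df -> is_derive g x dg ->
  is_derive (fun s => f s * g s) x (df * g x + f x * dg).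
Proof. intros; apply (is_derive_mult f g); auto. intros; apply Rmult_comm. Qed.
Lemma isd_const (c x : R) : is_derive (fun _ => c) x 0.
Proof. apply (is_derive_const c x). Qed.
Lemma isd_id (x : R) : is_derive (fun s => s) x 1.
Proof. apply (is_derive_id x). Qed.

Ltac exd := repeat split; try exact I; try (eexists; eassumption).
Ltac rwD := repeat match goal with
  | |- context [Derive ?F ?x] =>
      match goal with H : is_derive _ x ?l |- _ =>
        replace (Derive F x) with l by (symmetry; apply is_derive_unique; exact H) end
  end.

Lemma F01_derive k (X0 X1 W0 : R -> R) (dx0 dx1 dw0 s0 : R) :
  is_derive X0 s0 dx0 -> is_derive X1 s0 dx1 -> is_derive W0 s0 dw0 ->
  1 + k/4*(X0 s0 ^ 2 + X1 s0 ^ 2) > 0 ->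
  is_derive (fun s => Lm k (X0 s) (X1 s) * W0 s) s0
    (-(k/2)*(Lm k (X0 s0) (X1 s0))^2*(X0 s0 * dx0 + X1 s0 * dx1) * W0 s0
     + Lm k (X0 s0) (X1 s0) * dw0).
Proof.
  intros H0 H1 H2 Hm. simpl in Hm. unfold Lm. auto_derive.
  - exd; simpl; lra.
  - rwD. field. nra.
Qed.

Lemma F2_derive k t (X0 X1 W0 W1 W2 : R -> R) (dx0 dx1 dw0 dw1 dw2 s0 : R) :
  is_derive X0 s0 dx0 -> is_derive X1 s0 dx1 -> is_derive W0 s0 dw0 ->
  is_derive W1 s0 dw1 -> is_derive W2 s0 dw2 ->
  1 + k/4*(X0 s0 ^ 2 + X1 s0 ^ 2) > 0 ->
  is_derive (fun s => W2 s + t * Lm k (X0 s) (X1 s) * (X1 s * W0 s - X0 s * W1 s)) s0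
    (dw2 + t * (-(k/2)*(Lm k (X0 s0) (X1 s0))^2*(X0 s0 * dx0 + X1 s0 * dx1))
       * (X1 s0 * W0 s0 - X0 s0 * W1 s0)
     + t * Lm k (X0 s0) (X1 s0) * (dx1 * W0 s0 + X1 s0 * dw0 - dx0 * W1 s0 - X0 s0 * dw1)).
Proof.
  intros H0 H1 H2 H3 H4 Hm. simpl in Hm. unfold Lm. auto_derive.
  - exd; simpl; lra.
  - rwD. field. nra.
Qed.

Definition dline (X : R -> pt) (s0 : R) (dX : pt) (n : nat) : Prop :=
  forall i, (i < n)%nat -> is_derive (fun s => X s i) s0 (dX i).

Lemma frv_derive k t (X W : R -> pt) dX dW s0 c :
  in_model k (X s0) -> dline X s0 dX 2 -> dline W s0 dW 3 ->
  is_derive (fun s => frv k t (X s) (W s) c) s0 (dfrv k t (X s0) dX (W s0) dW c).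
Proof.
  intros Hm HX HW. unfold in_model in Hm.
  assert (X0 := HX 0%nat ltac:(lia)). assert (X1 := HX 1%nat ltac:(lia)).
  assert (W0 := HW 0%nat ltac:(lia)). assert (W1 := HW 1%nat ltac:(lia)).
  assert (W2 := HW 2%nat ltac:(lia)).
  destruct c as [|[|c]].
  - exact (F01_derive k _ _ _ _ _ _ s0 X0 X1 W0 Hm).
  - exact (F01_derive k _ _ _ _ _ _ s0 X0 X1 W1 Hm).
  - exact (F2_derive k t _ _ _ _ _ _ _ _ _ _ s0 X0 X1 W0 W1 W2 Hm).
Qed.

Definition v3 (a b c : R) : pt := fun i => match i with 0%nat => a | 1%nat => b | _ => c end.

Definition ddfrv k t (X dX Y dY W dW Z dZ : pt) : pt := fun c =>
  let L := Lm k (X 0%nat) (X 1%nat) in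
  let Ls := -(k/2)*L^2*(X 0%nat * dX 0%nat + X 1%nat * dX 1%nat) in
  let dL := -(k/2)*L^2*(X 0%nat * Y 0%nat + X 1%nat * Y 1%nat) in
  let dLs := -(k/2)*(2*L*Ls*(X 0%nat * Y 0%nat + X 1%nat * Y 1%nat)
              + L^2*(dX 0%nat * Y 0%nat + X 0%nat * dY 0%nat + dX 1%nat * Y 1%nat + X 1%nat * dY 1%nat)) in
  match c with
  | 0%nat => dLs * W 0%nat + dL * dW 0%nat + Ls * Z 0%nat + L * dZ 0%nat
  | 1%nat => dLs * W 1%nat + dL * dW 1%nat + Ls * Z 1%nat + L * dZ 1%nat
  | _ => dZ 2%nat + t*dLs*(X 1%nat * W 0%nat - X 0%nat * W 1%nat)
     + t*dL*(dX 1%nat * W 0%nat + X 1%nat * dW 0%nat - dX 0%nat * W 1%nat - X 0%nat * dW 1%nat)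
     + t*Ls*(Y 1%nat * W 0%nat + X 1%nat * Z 0%nat - Y 0%nat * W 1%nat - X 0%nat * Z 1%nat)
     + t*L*(dY 1%nat * W 0%nat + Y 1%nat * dW 0%nat + dX 1%nat * Z 0%nat + X 1%nat * dZ 0%nat
            - dY 0%nat * W 1%nat - Y 0%nat * dW 1%nat - dX 0%nat * Z 1%nat - X 0%nat * dZ 1%nat)
  end.

Lemma ddfrv_scalar k t (X0 X1 Y0 Y1 W0 W1 W2 Z0 Z1 Z2 : R -> R)
  (dx0 dx1 dy0 dy1 dw0 dw1 dw2 dz0 dz1 dz2 s0 : R) c :
  is_derive X0 s0 dx0 -> is_derive X1 s0 dx1 -> is_derive Y0 s0 dy0 -> is_derive Y1 s0 dy1 ->
  is_derive W0 s0 dw0 -> is_derive W1 s0 dw1 -> is_derive W2 s0 dw2 ->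
  is_derive Z0 s0 dz0 -> is_derive Z1 s0 dz1 -> is_derive Z2 s0 dz2 ->
  1 + k/4*(X0 s0 ^ 2 + X1 s0 ^ 2) > 0 ->
  is_derive (fun s => dfrv k t (v3 (X0 s) (X1 s) 0) (v3 (Y0 s) (Y1 s) 0)
                        (v3 (W0 s) (W1 s) (W2 s)) (v3 (Z0 s) (Z1 s) (Z2 s)) c) s0
    (ddfrv k t (v3 (X0 s0) (X1 s0) 0) (v3 dx0 dx1 0) (v3 (Y0 s0) (Y1 s0) 0) (v3 dy0 dy1 0)
       (v3 (W0 s0) (W1 s0) (W2 s0)) (v3 dw0 dw1 dw2) (v3 (Z0 s0) (Z1 s0) (Z2 s0)) (v3 dz0 dz1 dz2) c).
Proof.
  intros HX0 HX1 HY0 HY1 HW0 HW1 HW2 HZ0 HZ1 HZ2 Hm. simpl in Hm.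
  destruct c as [|[|c]]; unfold dfrv, ddfrv, v3, Lm; simpl; auto_derive;
  try (exd; simpl; lra); rwD; field; nra.
Qed.

Lemma ddfrv_derive k t (X Y W Z : R -> pt) dX dY dW dZ s0 c :
  in_model k (X s0) -> dline X s0 dX 2 -> dline Y s0 dY 2 -> dline W s0 dW 3 -> dline Z s0 dZ 3 ->
  is_derive (fun s => dfrv k t (X s) (Y s) (W s) (Z s) c) s0
    (ddfrv k t (X s0) dX (Y s0) dY (W s0) dW (Z s0) dZ c).
Proof.
  intros Hm HX HY HW HZ. unfold in_model in Hm.
  pose proof (ddfrv_scalar k t (fun s => X s 0%nat) (fun s => X s 1%nat) (fun s => Y s 0%nat) (fun s => Y s 1%nat)
    (fun s => W s 0%nat) (fun s => W s 1%nat) (fun s => W s 2%nat)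
    (fun s => Z s 0%nat) (fun s => Z s 1%nat) (fun s => Z s 2%nat)
    (dX 0%nat) (dX 1%nat) (dY 0%nat) (dY 1%nat) (dW 0%nat) (dW 1%nat) (dW 2%nat) (dZ 0%nat) (dZ 1%nat) (dZ 2%nat) s0 c
    (HX 0%nat ltac:(lia)) (HX 1%nat ltac:(lia)) (HY 0%nat ltac:(lia)) (HY 1%nat ltac:(lia))
    (HW 0%nat ltac:(lia)) (HW 1%nat ltac:(lia)) (HW 2%nat ltac:(lia))
    (HZ 0%nat ltac:(lia)) (HZ 1%nat ltac:(lia)) (HZ 2%nat ltac:(lia)) Hm) as H.
  destruct c as [|[|c]]; exact H.
Qed.

Lemma sym_dd k t (P E F M G T : pt) c :
  ddfrv k t P F E M E M G T c = ddfrv k t P E F M E G M T c.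
Proof. destruct c as [|[|c]]; unfold ddfrv; simpl; ring. Qed.

Lemma torsion k t (P A B M : pt) c : in_model k P ->
  dfrv k t P B A M c - dfrv k t P A B M c =
  Omv k t P (frv k t P A) (frv k t P B) c - Omv k t P (frv k t P B) (frv k t P A) c.
Proof.
  intro H. unfold in_model in H. simpl in H.
  destruct c as [|[|c]]; unfold dfrv, Omv, frv, rho, Lm; simpl; field; nra.
Qed.

Lemma umb_frame k t (p w n d : pt) (lam : R) : in_model k p ->
  (forall kk, (kk < 3)%nat ->
     sum3 (fun j => gM k t kk j p * d j) +
     sum3 (fun i => sum3 (fun j => Gamma1 k t i j kk p * w i * n j))
     = lam * gdot k t p w (upd (fun _ => 0) kk 1)) ->
  forall c, dfrv k t p w n d c = lam * frv k t p w c - Omv k t p (frv k t p w) (frv k t p n) c.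
Proof.
  intros Hm Heq.
  assert (HL : Lm k (p 0%nat) (p 1%nat) <> 0).
  { unfold Lm. apply Rinv_neq_0_compat. unfold in_model in Hm. lra. }
  assert (E : forall kk, (kk < 3)%nat ->
    omT k t p (fun c => dfrv k t p w n d c + Omv k t p (frv k t p w) (frv k t p n) c - lam * frv k t p w c) kk = 0).
  { intros kk Hk. specialize (Heq kk Hk). rewrite conv_frame in Heq by assumption.
    rewrite gdot_frame in Heq.
    destruct kk as [|[|[|kk]]]; try lia; unfold omT, dot3, upd in *; simpl in *; unfold frv in *; simpl in *;
    lra. }
  pose proof (E 0%nat ltac:(lia)) as E0. pose proof (E 1%nat ltac:(lia)) as E1.
  pose proof (E 2%nat ltac:(lia)) as E2. unfold omT in E0, E1, E2. cbv beta iota zeta in E0, E1, E2.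
  set (L := Lm k (p 0%nat) (p 1%nat)) in *.
  set (Y0 := dfrv k t p w n d 0%nat + Omv k t p (frv k t p w) (frv k t p n) 0%nat - lam * frv k t p w 0%nat) in *.
  set (Y1 := dfrv k t p w n d 1%nat + Omv k t p (frv k t p w) (frv k t p n) 1%nat - lam * frv k t p w 1%nat) in *.
  set (Y2 := dfrv k t p w n d 2%nat + Omv k t p (frv k t p w) (frv k t p n) 2%nat - lam * frv k t p w 2%nat) in *.
  rewrite E2 in E0, E1.
  assert (Z0 : Y0 = 0).
  { apply (Rmult_eq_reg_l L); [|exact HL]. lra. }
  assert (Z1 : Y1 = 0).
  { apply (Rmult_eq_reg_l L); [|exact HL]. lra. }
  intro c. destruct c as [|[|c]]; unfold Y0, Y1, Y2 in *; [lra|lra|].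
  change (dfrv k t p w n d (S (S c))) with (dfrv k t p w n d 2%nat).
  change (frv k t p w (S (S c))) with (frv k t p w 2%nat).
  change (Omv k t p (frv k t p w) (frv k t p n) (S (S c))) with (Omv k t p (frv k t p w) (frv k t p n) 2%nat).
  lra.
Qed.

Definition OmD t (r : R) (a Y : pt) : pt := fun c =>
  match c with
  | 0%nat => r * Y 1%nat + t*(a 1%nat * Y 2%nat + a 2%nat * Y 1%nat)
  | 1%nat => -(r * Y 0%nat) - t*(a 0%nat * Y 2%nat + a 2%nat * Y 0%nat)
  | _ => t*(a 0%nat * Y 1%nat - a 1%nat * Y 0%nat)
  end.

Definition drho k (p dp a da : pt) : R :=
  k/2*(dp 0%nat * a 1%nat + p 0%nat * da 1%nat - dp 1%nat * a 0%nat - p 1%nat * da 0%nat).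

Definition Dd k (p : pt) : R := 1 + k/4*(p 0%nat ^ 2 + p 1%nat ^ 2).

Lemma codazzi_alg k t (P Ac Bc a b N au av bu bv W1 W2 : pt) (lam lu lv : R) :
  Ac 0%nat = Dd k P * a 0%nat -> Ac 1%nat = Dd k P * a 1%nat ->
  Bc 0%nat = Dd k P * b 0%nat -> Bc 1%nat = Dd k P * b 1%nat ->
  (forall c, av c = bu c + Omv k t P a b c - Omv k t P b a c) ->
  dot3 N a = 0 -> dot3 N b = 0 ->
  (lv * dot3 a a + lam * (dot3 av a + dot3 a av)) +
  (dot3 (fun c => lam * b c - Omv k t P b N c) (fun c => au c + Omv k t P a a c) +
   dot3 N (fun c => W1 c + (OmD t (drho k P Bc a av) av a c + Omv k t P a av c))) = 0 ->
  (lu * dot3 a b + lam * (dot3 au b + dot3 a bu)) +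
  (dot3 (fun c => lam * a c - Omv k t P a N c) (fun c => av c + Omv k t P b a c) +
   dot3 N (fun c => W1 c + (OmD t (drho k P Ac b bu) bu a c + Omv k t P b au c))) = 0 ->
  (lu * dot3 b b + lam * (dot3 bu b + dot3 b bu)) +
  (dot3 (fun c => lam * a c - Omv k t P a N c) (fun c => bv c + Omv k t P b b c) +
   dot3 N (fun c => W2 c + (OmD t (drho k P Ac b bu) bu b c + Omv k t P b bu c))) = 0 ->
  (lv * dot3 a b + lam * (dot3 av b + dot3 a bv)) +
  (dot3 (fun c => lam * b c - Omv k t P b N c) (fun c => bu c + Omv k t P a b c) +
   dot3 N (fun c => W2 c + (OmD t (drho k P Bc a av) av b c + Omv k t P a bv c))) = 0 ->
  lv * dot3 a a - lu * dot3 a b - (k - 4*t^2) * N 2%nat * (b 2%nat * dot3 a a - a 2%nat * dot3 a b) = 0 /\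
  lu * dot3 b b - lv * dot3 a b - (k - 4*t^2) * N 2%nat * (a 2%nat * dot3 b b - b 2%nat * dot3 a b) = 0.
Proof.
  intros HA0 HA1 HB0 HB1 HT HNa HNb H1 H2 H3 H4.
  assert (K1 : ((k - 3*t^2) * dot3 a a - (k - 4*t^2) * a 2%nat ^ 2) * dot3 N b = 0) by (rewrite HNb; ring).
  assert (K2 : (-(k - 3*t^2) * dot3 a b + (k - 4*t^2) * a 2%nat * b 2%nat) * dot3 N a = 0) by (rewrite HNa; ring).
  assert (K3 : ((k - 3*t^2) * dot3 b b - (k - 4*t^2) * b 2%nat ^ 2) * dot3 N a = 0) by (rewrite HNa; ring).
  assert (K4 : (-(k - 3*t^2) * dot3 a b + (k - 4*t^2) * a 2%nat * b 2%nat) * dot3 N b = 0) by (rewrite HNb; ring).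
  unfold dot3, OmD, Omv, drho, rho, Dd in *; cbv beta iota in *.
  rewrite !HT in *. rewrite HA0, HA1, HB0, HB1 in *.
  split; lra.
Qed.

Lemma isd_eq (f : R -> R) (x l l' : R) : is_derive f x l -> l = l' -> is_derive f x l'.
Proof. intros H E; subst; exact H. Qed.
Lemma isd_opp (f : R -> R) (x l : R) : is_derive f x l -> is_derive (fun s => - f s) x (- l).
Proof. intro H. apply (is_derive_opp f x l H). Qed.

Ltac build := repeat match goal with
  | H : is_derive ?g ?x _ |- is_derive ?g ?x _ => exact H
  | |- is_derive (fun _ => ?c) _ _ => apply isd_const
  | |- is_derive (fun s => _ + _) _ _ => apply isd_plus
  | |- is_derive (fun s => _ - _) _ _ => apply isd_minus
  | |- is_derive (fun s => _ * _) _ _ => apply isd_mult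
  | |- is_derive (fun s => - _) _ _ => apply isd_opp
  | |- is_derive (fun s => ?F s) _ _ => is_var F; eassumption
  | |- is_derive (fun s => ?F s ?i) _ _ => is_var F; eassumption
  end.

Lemma dot3_derive (U V : R -> pt) dU dV s0 : dline U s0 dU 3 -> dline V s0 dV 3 ->
  is_derive (fun s => dot3 (U s) (V s)) s0 (dot3 dU (V s0) + dot3 (U s0) dV).
Proof.
  intros HU HV. unfold dot3.
  pose proof (HU 0%nat ltac:(lia)). pose proof (HU 1%nat ltac:(lia)). pose proof (HU 2%nat ltac:(lia)).
  pose proof (HV 0%nat ltac:(lia)). pose proof (HV 1%nat ltac:(lia)). pose proof (HV 2%nat ltac:(lia)).
  eapply isd_eq; [build|]. cbv beta. ring.
Qed.

Lemma Omv_derive k t (P a Y : R -> pt) dP da dY s0 c :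
  dline P s0 dP 2 -> dline a s0 da 3 -> dline Y s0 dY 3 ->
  is_derive (fun s => Omv k t (P s) (a s) (Y s) c) s0
    (OmD t (drho k (P s0) dP (a s0) da) da (Y s0) c + Omv k t (P s0) (a s0) dY c).
Proof.
  intros HP Ha HY.
  pose proof (HP 0%nat ltac:(lia)). pose proof (HP 1%nat ltac:(lia)).
  pose proof (Ha 0%nat ltac:(lia)). pose proof (Ha 1%nat ltac:(lia)). pose proof (Ha 2%nat ltac:(lia)).
  pose proof (HY 0%nat ltac:(lia)). pose proof (HY 1%nat ltac:(lia)). pose proof (HY 2%nat ltac:(lia)).
  destruct c as [|[|c]]; unfold Omv, OmD, drho, rho; cbv beta iota zeta; (eapply isd_eq; [build|]); cbv beta; ring.
Qed.

Definition reg1 (U : R * R -> Prop) (h : R * R -> R) : Prop :=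
  forall q, U q -> continuous h q /\ ex_derive (fun t => h (t, snd q)) (fst q) /\
                   ex_derive (fun t => h (fst q, t)) (snd q).

Lemma Ck_S n U h : Ck (S n) U h -> Ck n U h.
Proof.
  revert h. induction n as [|n IH]; intros h H.
  - destruct H as [H _]. intros q Hq. apply (H q Hq).
  - destruct H as [H0 [H1 H2]]. split; [exact H0|]. split; apply IH; assumption.
Qed.

Lemma Ck_reg n U h : Ck (S n) U h -> reg1 U h.
Proof. intros [H _]. exact H. Qed.

Lemma Ck_du n U h : Ck (S n) U h -> Ck n U (du h).
Proof. intros [_ [H _]]. exact H. Qed.
Lemma Ck_dv n U h : Ck (S n) U h -> Ck n U (dv h).
Proof. intros [_ [_ H]]. exact H. Qed.
Lemma Ck_cont0 U h q : Ck 0 U h -> U q -> continuous h q.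
Proof. intros H Hq. exact (H q Hq). Qed.

Lemma open_line_u (U : R * R -> Prop) u v : open U -> U (u, v) -> locally u (fun s => U (s, v)).
Proof.
  intros Ho Hq. specialize (Ho _ Hq).
  assert (H2 : locally_2d (fun a b => U (a, b)) u v).
  { apply locally_2d_locally. eapply filter_imp; [|exact Ho]. intros [a b] H; exact H. }
  exact (locally_2d_1d_const_y _ _ _ H2).
Qed.

Lemma open_line_v (U : R * R -> Prop) u v : open U -> U (u, v) -> locally v (fun s => U (u, s)).
Proof.
  intros Ho Hq. specialize (Ho _ Hq).
  assert (H2 : locally_2d (fun a b => U (a, b)) u v).
  { apply locally_2d_locally. eapply filter_imp; [|exact Ho]. intros [a b] H; exact H. }
  exact (locally_2d_1d_const_x _ _ _ H2).
Qed.

Lemma cont2d (h : R * R -> R) u v : continuous h (u, v) ->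
  continuity_2d_pt (fun a b => h (a, b)) u v.
Proof.
  intro H. apply continuity_2d_pt_filterlim.
  eapply filterlim_ext; [|exact H]. intros [a b]. reflexivity.
Qed.

Lemma schwarz_Ck2 U h u v : open U -> Ck 2 U h -> U (u, v) ->
  du (dv h) (u, v) = dv (du h) (u, v).
Proof.
  intros Ho HC Hq.
  destruct HC as [R0 [[R1 [C11 C12]] [R2 [C21 C22]]]].
  unfold du, dv; simpl.
  apply (Schwarz (fun a b => h (a, b)) u v).
  - apply locally_2d_locally. specialize (Ho _ Hq).
    eapply filter_imp; [|exact Ho]. intros [a b] Hab. simpl.
    destruct (R0 _ Hab) as [_ [E1 E2]]. destruct (R2 _ Hab) as [_ [E3 _]].
    destruct (R1 _ Hab) as [_ [_ E4]].
    repeat split; [exact E1 | exact E2 | exact E3 | exact E4].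
  - exact (cont2d (du (dv h)) u v (C21 _ Hq)).
  - exact (cont2d (dv (du h)) u v (C12 _ Hq)).
Qed.

Lemma Phi_derive k t (LAM : R -> R) (P X Y N Z Q S : R -> pt) (dLAM : R) dP dX dY dN dZ dQ dS s0 :
  is_derive LAM s0 dLAM -> dline P s0 dP 2 -> dline X s0 dX 3 -> dline Y s0 dY 3 ->
  dline N s0 dN 3 -> dline Z s0 dZ 3 -> dline Q s0 dQ 3 -> dline S s0 dS 3 ->
  is_derive (fun s => LAM s * dot3 (X s) (Y s) +
                      dot3 (N s) (fun c => Z s c + Omv k t (P s) (Q s) (S s) c)) s0
    ((dLAM * dot3 (X s0) (Y s0) + LAM s0 * (dot3 dX (Y s0) + dot3 (X s0) dY)) +
     (dot3 dN (fun c => Z s0 c + Omv k t (P s0) (Q s0) (S s0) c) +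
      dot3 (N s0) (fun c => dZ c + (OmD t (drho k (P s0) dP (Q s0) dQ) dQ (S s0) c
                                    + Omv k t (P s0) (Q s0) dS c)))).
Proof.
  intros HL HP HX HY HN HZ HQ HS.
  eapply isd_eq.
  - apply isd_plus.
    + apply isd_mult; [exact HL | apply dot3_derive; eassumption].
    + apply dot3_derive; [exact HN|]. intros c Hc. apply isd_plus; [exact (HZ c Hc)|].
      apply Omv_derive; eassumption.
  - cbv beta. reflexivity.
Qed.

Lemma locally_zero_derive (F : R -> R) (x l : R) :
  is_derive F x l -> locally x (fun s => F s = 0) -> l = 0.
Proof.
  intros H1 H2.
  assert (H3 : is_derive F x 0).
  { apply (is_derive_ext_loc (fun _ => 0)).
    - eapply filter_imp; [|exact H2]. intros s Hs. simpl. rewrite Hs. reflexivity.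
    - apply isd_const. }
  rewrite <- (is_derive_unique _ _ _ H1). exact (is_derive_unique _ _ _ H3).
Qed.

Definition fuu (f : R * R -> pt) q : pt := fun i => du (fun q' => fu f q' i) q.
Definition fuv (f : R * R -> pt) q : pt := fun i => dv (fun q' => fu f q' i) q.
Definition fvu (f : R * R -> pt) q : pt := fun i => du (fun q' => fv f q' i) q.
Definition fvv (f : R * R -> pt) q : pt := fun i => dv (fun q' => fv f q' i) q.
Definition fuuv (f : R * R -> pt) q : pt := fun i => dv (fun q' => fuu f q' i) q.
Definition fuvu (f : R * R -> pt) q : pt := fun i => du (fun q' => fuv f q' i) q.
Definition fvvu (f : R * R -> pt) q : pt := fun i => du (fun q' => fvv f q' i) q.
Definition fvuv (f : R * R -> pt) q : pt := fun i => dv (fun q' => fvu f q' i) q.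

Lemma jet_u U (h : R * R -> R) n u v : Ck (S n) U h -> U (u, v) ->
  is_derive (fun s => h (s, v)) u (du h (u, v)).
Proof. intros HC Hq. destruct (Ck_reg n U h HC (u, v) Hq) as [_ [E1 _]]. exact (Derive_correct _ _ E1). Qed.
Lemma jet_v U (h : R * R -> R) n u v : Ck (S n) U h -> U (u, v) ->
  is_derive (fun s => h (u, s)) v (dv h (u, v)).
Proof. intros HC Hq. destruct (Ck_reg n U h HC (u, v) Hq) as [_ [_ E2]]. exact (Derive_correct _ _ E2). Qed.


Lemma TU_open k t U f N lam : totally_umbilic_surface k t U f N lam -> open U.
Proof. intros H; apply H. Qed.
Lemma TU_in k t U f N lam q : totally_umbilic_surface k t U f N lam -> U q -> in_model k (f q).
Proof. intros H Hq; apply H; exact Hq. Qed.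
Lemma TU_Ck k t U f N lam i : totally_umbilic_surface k t U f N lam -> (i < 3)%nat -> Ck 3 U (fun q => f q i).
Proof. intros H Hi; apply H; exact Hi. Qed.

Ltac getCk H i Hi := pose proof (TU_Ck _ _ _ _ _ _ i H Hi) as HC.

Lemma jets k t U f N lam u v : totally_umbilic_surface k t U f N lam -> U (u, v) ->
  dline (fun s => f (s, v)) u (fu f (u, v)) 3 /\
  dline (fun s => f (u, s)) v (fv f (u, v)) 3 /\
  dline (fun s => fu f (s, v)) u (fuu f (u, v)) 3 /\
  dline (fun s => fu f (u, s)) v (fuv f (u, v)) 3 /\
  dline (fun s => fv f (s, v)) u (fvu f (u, v)) 3 /\
  dline (fun s => fv f (u, s)) v (fvv f (u, v)) 3 /\
  dline (fun s => fuu f (u, s)) v (fuuv f (u, v)) 3 /\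
  dline (fun s => fuv f (s, v)) u (fuvu f (u, v)) 3 /\
  dline (fun s => fvv f (s, v)) u (fvvu f (u, v)) 3 /\
  dline (fun s => fvu f (u, s)) v (fvuv f (u, v)) 3.
Proof.
  intros H Hq.
  repeat match goal with |- _ /\ _ => split end; intros j Hj; pose proof (TU_Ck _ _ _ _ _ _ j H Hj) as HC.
  - exact (jet_u U _ 2 u v HC Hq).
  - exact (jet_v U _ 2 u v HC Hq).
  - exact (jet_u U _ 1 u v (Ck_du 2 U _ HC) Hq).
  - exact (jet_v U _ 1 u v (Ck_du 2 U _ HC) Hq).
  - exact (jet_u U _ 1 u v (Ck_dv 2 U _ HC) Hq).
  - exact (jet_v U _ 1 u v (Ck_dv 2 U _ HC) Hq).
  - exact (jet_v U _ 0 u v (Ck_du 1 U _ (Ck_du 2 U _ HC)) Hq).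
  - exact (jet_u U _ 0 u v (Ck_dv 1 U _ (Ck_du 2 U _ HC)) Hq).
  - exact (jet_u U _ 0 u v (Ck_dv 1 U _ (Ck_dv 2 U _ HC)) Hq).
  - exact (jet_v U _ 0 u v (Ck_du 1 U _ (Ck_dv 2 U _ HC)) Hq).
Qed.

Lemma schw k t U f N lam u v i : totally_umbilic_surface k t U f N lam -> U (u, v) -> (i < 3)%nat ->
  fvu f (u, v) i = fuv f (u, v) i /\ fuvu f (u, v) i = fuuv f (u, v) i /\
  fvuv f (u, v) i = fvvu f (u, v) i.
Proof.
  intros H Hq Hi. pose proof (TU_Ck _ _ _ _ _ _ i H Hi) as HC. pose proof (TU_open _ _ _ _ _ _ H) as Ho.
  split; [|split].
  - exact (schwarz_Ck2 U _ u v Ho (Ck_S 2 U _ HC) Hq).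
  - exact (schwarz_Ck2 U _ u v Ho (Ck_du 2 U _ HC) Hq).
  - exact (eq_sym (schwarz_Ck2 U _ u v Ho (Ck_dv 2 U _ HC) Hq)).
Qed.

Lemma TU_indep k t U f N lam q : totally_umbilic_surface k t U f N lam -> U q -> indep (fu f q) (fv f q).
Proof. intros H Hq; apply H; exact Hq. Qed.
Lemma TU_orth k t U f N lam q : totally_umbilic_surface k t U f N lam -> U q ->
     gdot k t (f q) (N q) (fu f q) = 0 /\
     gdot k t (f q) (N q) (fv f q) = 0 /\
     gdot k t (f q) (N q) (N q) = 1.
Proof. intros H Hq; apply H; exact Hq. Qed.
Lemma TU_Nd k t U f N lam q i : totally_umbilic_surface k t U f N lam -> U q -> (i < 3)%nat ->
     ex_derive (fun t => N (t, snd q) i) (fst q) /\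
     ex_derive (fun t => N (fst q, t) i) (snd q).
Proof. intros H Hq Hi; apply H; assumption. Qed.
Lemma TU_umb k t U f N lam q kk : totally_umbilic_surface k t U f N lam -> U q -> (kk < 3)%nat ->
     covN_low k t f N true q kk = lam q * gdot k t (f q) (fu f q) (upd (fun _ => 0) kk 1) /\
     covN_low k t f N false q kk = lam q * gdot k t (f q) (fv f q) (upd (fun _ => 0) kk 1).
Proof. intros H Hq Hk; apply H; assumption. Qed.

Definition ah k t (f : R * R -> pt) q := frv k t (f q) (fu f q).
Definition bh k t (f : R * R -> pt) q := frv k t (f q) (fv f q).
Definition Nh k t (f N : R * R -> pt) q := frv k t (f q) (N q).
Definition auh k t (f : R * R -> pt) q := dfrv k t (f q) (fu f q) (fu f q) (fuu f q).
Definition avh k t (f : R * R -> pt) q := dfrv k t (f q) (fv f q) (fu f q) (fuv f q).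
Definition buh k t (f : R * R -> pt) q := dfrv k t (f q) (fu f q) (fv f q) (fvu f q).
Definition bvh k t (f : R * R -> pt) q := dfrv k t (f q) (fv f q) (fv f q) (fvv f q).
Definition W1 k t (f : R * R -> pt) q :=
  ddfrv k t (f q) (fv f q) (fu f q) (fuv f q) (fu f q) (fuv f q) (fuu f q) (fuuv f q).
Definition Z2 k t (f : R * R -> pt) q :=
  ddfrv k t (f q) (fu f q) (fv f q) (fvu f q) (fv f q) (fvu f q) (fvv f q) (fvvu f q).
Definition Nuh k t (f N : R * R -> pt) (lam : R * R -> R) q : pt :=
  fun c => lam q * ah k t f q c - Omv k t (f q) (ah k t f q) (Nh k t f N q) c.
Definition Nvh k t (f N : R * R -> pt) (lam : R * R -> R) q : pt :=
  fun c => lam q * bh k t f q c - Omv k t (f q) (bh k t f q) (Nh k t f N q) c.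

Lemma dline_weak X s0 dX : dline X s0 dX 3 -> dline X s0 dX 2.
Proof. intros H i Hi. apply H. lia. Qed.


Lemma frame_jets k t U f N lam u v : totally_umbilic_surface k t U f N lam -> U (u, v) ->
  dline (fun s => ah k t f (s, v)) u (auh k t f (u, v)) 3 /\
  dline (fun s => ah k t f (u, s)) v (avh k t f (u, v)) 3 /\
  dline (fun s => bh k t f (s, v)) u (buh k t f (u, v)) 3 /\
  dline (fun s => bh k t f (u, s)) v (bvh k t f (u, v)) 3 /\
  dline (fun s => auh k t f (u, s)) v (W1 k t f (u, v)) 3 /\
  dline (fun s => avh k t f (s, v)) u (W1 k t f (u, v)) 3 /\
  dline (fun s => bvh k t f (s, v)) u (Z2 k t f (u, v)) 3 /\
  dline (fun s => buh k t f (u, s)) v (Z2 k t f (u, v)) 3.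
Proof.
  intros H Hq.
  pose proof (TU_in _ _ _ _ _ _ _ H Hq) as Hm.
  destruct (jets _ _ _ _ _ _ u v H Hq) as [J1 [J2 [J3 [J4 [J5 [J6 [J7 [J8 [J9 J10]]]]]]]]].
  assert (S0 := schw _ _ _ _ _ _ u v 0 H Hq ltac:(lia)).
  assert (S1 := schw _ _ _ _ _ _ u v 1 H Hq ltac:(lia)).
  assert (S2 := schw _ _ _ _ _ _ u v 2 H Hq ltac:(lia)).
  repeat match goal with |- _ /\ _ => split end; intros c Hc.
  - exact (frv_derive k t _ _ _ _ u c Hm (dline_weak _ _ _ J1) J3).
  - exact (frv_derive k t _ _ _ _ v c Hm (dline_weak _ _ _ J2) J4).
  - exact (frv_derive k t _ _ _ _ u c Hm (dline_weak _ _ _ J1) J5).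
  - exact (frv_derive k t _ _ _ _ v c Hm (dline_weak _ _ _ J2) J6).
  - exact (ddfrv_derive k t _ _ _ _ _ _ _ _ v c Hm (dline_weak _ _ _ J2) (dline_weak _ _ _ J4) J4 J7).
  - eapply isd_eq.
    + exact (ddfrv_derive k t _ _ _ _ _ _ _ _ u c Hm (dline_weak _ _ _ J1) (dline_weak _ _ _ J5) J3 J8).
    + unfold W1, ddfrv.
      destruct S0 as [S0a [S0b _]]. destruct S1 as [S1a [S1b _]]. destruct S2 as [S2a [S2b _]].
      destruct c as [|[|c]]; cbv beta iota zeta; rewrite ?S0a, ?S1a, ?S0b, ?S1b, ?S2b; ring.
  - exact (ddfrv_derive k t _ _ _ _ _ _ _ _ u c Hm (dline_weak _ _ _ J1) (dline_weak _ _ _ J5) J5 J9).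
  - eapply isd_eq.
    + exact (ddfrv_derive k t _ _ _ _ _ _ _ _ v c Hm (dline_weak _ _ _ J2) (dline_weak _ _ _ J4) J6 J10).
    + unfold Z2, ddfrv.
      destruct S0 as [S0a [_ S0c]]. destruct S1 as [S1a [_ S1c]]. destruct S2 as [S2a [_ S2c]].
      destruct c as [|[|c]]; cbv beta iota zeta; rewrite ?S0a, ?S1a, ?S0c, ?S1c, ?S2c; ring.
Qed.

Lemma N_jets k t U f N lam u v : totally_umbilic_surface k t U f N lam -> U (u, v) ->
  dline (fun s => Nh k t f N (s, v)) u (Nuh k t f N lam (u, v)) 3 /\
  dline (fun s => Nh k t f N (u, s)) v (Nvh k t f N lam (u, v)) 3.
Proof.
  intros H Hq.
  pose proof (TU_in _ _ _ _ _ _ _ H Hq) as Hm.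
  destruct (jets _ _ _ _ _ _ u v H Hq) as [J1 [J2 _]].
  split; intros c Hc.
  - assert (HN : dline (fun s => N (s, v)) u (fu N (u, v)) 3).
    { intros i Hi. destruct (TU_Nd _ _ _ _ _ _ (u, v) i H Hq Hi) as [E1 _]. exact (Derive_correct _ _ E1). }
    eapply isd_eq.
    + exact (frv_derive k t _ _ _ _ u c Hm (dline_weak _ _ _ J1) HN).
    + apply (umb_frame k t (f (u, v)) (fu f (u, v)) (N (u, v)) (fu N (u, v)) (lam (u, v)) Hm).
      intros kk Hk. exact (proj1 (TU_umb _ _ _ _ _ _ _ kk H Hq Hk)).
  - assert (HN : dline (fun s => N (u, s)) v (fv N (u, v)) 3).
    { intros i Hi. destruct (TU_Nd _ _ _ _ _ _ (u, v) i H Hq Hi) as [_ E2]. exact (Derive_correct _ _ E2). }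
    eapply isd_eq.
    + exact (frv_derive k t _ _ _ _ v c Hm (dline_weak _ _ _ J2) HN).
    + apply (umb_frame k t (f (u, v)) (fv f (u, v)) (N (u, v)) (fv N (u, v)) (lam (u, v)) Hm).
      intros kk Hk. exact (proj2 (TU_umb _ _ _ _ _ _ _ kk H Hq Hk)).
Qed.

Lemma frame_orth k t U f N lam q : totally_umbilic_surface k t U f N lam -> U q ->
  dot3 (Nh k t f N q) (ah k t f q) = 0 /\ dot3 (Nh k t f N q) (bh k t f q) = 0 /\
  dot3 (Nh k t f N q) (Nh k t f N q) = 1.
Proof.
  intros H Hq. destruct (TU_orth _ _ _ _ _ _ q H Hq) as [O1 [O2 O3]].
  rewrite gdot_frame in O1, O2, O3. unfold Nh, ah, bh. auto.
Qed.

Lemma hrel_gen (X Y : R -> pt) dX dY s0 :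
  dline X s0 dX 3 -> dline Y s0 dY 3 -> locally s0 (fun s => dot3 (X s) (Y s) = 0) ->
  dot3 dX (Y s0) + dot3 (X s0) dY = 0.
Proof.
  intros HX HY Hz. exact (locally_zero_derive _ _ _ (dot3_derive X Y dX dY s0 HX HY) Hz).
Qed.

Lemma hrels k t U f N lam u v : totally_umbilic_surface k t U f N lam -> U (u, v) ->
  let P := f (u, v) in let a := ah k t f (u, v) in let b := bh k t f (u, v) in
  let Nq := Nh k t f N (u, v) in let l := lam (u, v) in
  l * dot3 a a + dot3 Nq (fun c => auh k t f (u, v) c + Omv k t P a a c) = 0 /\
  l * dot3 a b + dot3 Nq (fun c => avh k t f (u, v) c + Omv k t P b a c) = 0 /\
  l * dot3 a b + dot3 Nq (fun c => buh k t f (u, v) c + Omv k t P a b c) = 0 /\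
  l * dot3 b b + dot3 Nq (fun c => bvh k t f (u, v) c + Omv k t P b b c) = 0.
Proof.
  intros H Hq P a b Nq l.
  pose proof (TU_open _ _ _ _ _ _ H) as Ho.
  destruct (frame_jets _ _ _ _ _ _ u v H Hq) as [FA [FB [FC [FD _]]]].
  destruct (N_jets _ _ _ _ _ _ u v H Hq) as [NU NV].
  assert (Lu : locally u (fun s => U (s, v))) by (apply open_line_u; assumption).
  assert (Lv : locally v (fun s => U (u, s))) by (apply open_line_v; assumption).
  assert (E1 := hrel_gen _ _ _ _ u NU FA ltac:(eapply filter_imp; [|exact Lu]; intros s Hs; exact (proj1 (frame_orth _ _ _ _ _ _ _ H Hs))) ).
  assert (E2 := hrel_gen _ _ _ _ v NV FB ltac:(eapply filter_imp; [|exact Lv]; intros s Hs; exact (proj1 (frame_orth _ _ _ _ _ _ _ H Hs))) ).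
  assert (E3 := hrel_gen _ _ _ _ u NU FC ltac:(eapply filter_imp; [|exact Lu]; intros s Hs; exact (proj1 (proj2 (frame_orth _ _ _ _ _ _ _ H Hs)))) ).
  assert (E4 := hrel_gen _ _ _ _ v NV FD ltac:(eapply filter_imp; [|exact Lv]; intros s Hs; exact (proj1 (proj2 (frame_orth _ _ _ _ _ _ _ H Hs)))) ).
  unfold Nuh, Nvh in *. fold P a b Nq l in E1, E2, E3, E4.
  unfold dot3, Omv, rho in *. cbv beta iota in *.
  repeat split; lra.
Qed.

Definition cross3 (a b : pt) : pt := fun c =>
  match c with
  | 0%nat => a 1%nat * b 2%nat - a 2%nat * b 1%nat
  | 1%nat => a 2%nat * b 0%nat - a 0%nat * b 2%nat
  | _ => a 0%nat * b 1%nat - a 1%nat * b 0%nat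
  end.

Lemma omT_cross k t P A B c : in_model k P ->
  omT k t P (cross3 (frv k t P A) (frv k t P B)) c = (Lm k (P 0%nat) (P 1%nat))^2 * cross3 A B c.
Proof.
  intro H. unfold in_model in H. simpl in H.
  destruct c as [|[|c]]; unfold omT, cross3, frv; cbv beta iota zeta; ring.
Qed.

Lemma lagrange (a b : pt) :
  dot3 a a * dot3 b b - (dot3 a b)^2 = dot3 (cross3 a b) (cross3 a b).
Proof. unfold dot3, cross3; simpl; ring. Qed.

Lemma cross_pos k t U f N lam q : totally_umbilic_surface k t U f N lam -> U q ->
  dot3 (cross3 (ah k t f q) (bh k t f q)) (cross3 (ah k t f q) (bh k t f q)) > 0.
Proof.
  intros H Hq. pose proof (TU_in _ _ _ _ _ _ _ H Hq) as Hm.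
  pose proof (TU_indep _ _ _ _ _ _ _ H Hq) as Hi.
  set (m := cross3 (ah k t f q) (bh k t f q)).
  assert (HL : Lm k (f q 0%nat) (f q 1%nat) <> 0).
  { unfold Lm. apply Rinv_neq_0_compat. unfold in_model in Hm. lra. }
  assert (HL2 : (Lm k (f q 0%nat) (f q 1%nat))^2 <> 0) by (apply pow_nonzero; exact HL).
  destruct (Rlt_or_le 0 (dot3 m m)) as [Hp|Hn]; [lra|exfalso].
  assert (Z : m 0%nat = 0 /\ m 1%nat = 0 /\ m 2%nat = 0).
  { unfold dot3 in Hn. repeat split; nra. }
  destruct Z as [Z0 [Z1 Z2]].
  assert (C : forall c, omT k t (f q) m c = 0).
  { intro c. destruct c as [|[|c]]; unfold omT; cbv beta iota zeta; rewrite ?Z0, ?Z1, ?Z2; ring. }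
  pose proof (C 0%nat) as C0. pose proof (C 1%nat) as C1. pose proof (C 2%nat) as C2.
  unfold m, ah, bh in C0, C1, C2. rewrite omT_cross in C0, C1, C2 by exact Hm.
  apply Rmult_integral in C0. apply Rmult_integral in C1. apply Rmult_integral in C2.
  unfold indep, cross3 in *. simpl in *. lra.
Qed.

Lemma gram k t U f N lam q : totally_umbilic_surface k t U f N lam -> U q ->
  dot3 (ah k t f q) (ah k t f q) * dot3 (bh k t f q) (bh k t f q) - (dot3 (ah k t f q) (bh k t f q))^2 > 0 /\
  dot3 (ah k t f q) (ah k t f q) > 0 /\ dot3 (bh k t f q) (bh k t f q) > 0.
Proof.
  intros H Hq. pose proof (cross_pos _ _ _ _ _ _ _ H Hq) as Hc. rewrite <- lagrange in Hc.
  assert (Ha : dot3 (ah k t f q) (ah k t f q) >= 0) by (unfold dot3; nra).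
  assert (Hb : dot3 (bh k t f q) (bh k t f q) >= 0) by (unfold dot3; nra).
  repeat split; [exact Hc| |]; nra.
Qed.

Lemma solve_lin (l A B : R) : l * A + B = 0 -> A > 0 -> - B / A = l.
Proof. intros H1 H2. field_simplify_eq; [lra | lra]. Qed.

Lemma lam_dv k t U f N lam u v : totally_umbilic_surface k t U f N lam -> U (u, v) ->
  ex_derive (fun s => lam (u, s)) v.
Proof.
  intros H Hq.
  pose proof (TU_open _ _ _ _ _ _ H) as Ho.
  assert (Lv : locally v (fun s => U (u, s))) by (apply open_line_v; assumption).
  destruct (frame_jets _ _ _ _ _ _ u v H Hq) as [_ [FB [_ [_ [FE _]]]]].
  destruct (N_jets _ _ _ _ _ _ u v H Hq) as [_ NV].
  destruct (jets _ _ _ _ _ _ u v H Hq) as [_ [J2 _]].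
  destruct (gram _ _ _ _ _ _ _ H Hq) as [_ [Ga _]].
  eexists. apply (is_derive_ext_loc (fun s => - dot3 (Nh k t f N (u, s))
      (fun c => auh k t f (u, s) c + Omv k t (f (u, s)) (ah k t f (u, s)) (ah k t f (u, s)) c)
      / dot3 (ah k t f (u, s)) (ah k t f (u, s)))).
  2:{ apply is_derive_div.
      - apply isd_opp. apply dot3_derive; [exact NV|]. intros c Hc. apply isd_plus; [exact (FE c Hc)|].
        apply Omv_derive; [exact (dline_weak _ _ _ J2) | exact FB | exact FB].
      - apply dot3_derive; [exact FB | exact FB].
      - cbv beta. apply Rgt_not_eq. assumption. }
  eapply filter_imp; [|exact Lv]. intros s Hs. cbv beta. match goal with |- ?a = ?b => change (@eq R a b) end.
  destruct (hrels _ _ _ _ _ _ u s H Hs) as [h1 _].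
  destruct (gram _ _ _ _ _ _ _ H Hs) as [_ [Ga' _]].
  cbv zeta in h1. exact (solve_lin _ _ _ h1 Ga').
Qed.

Lemma lam_du k t U f N lam u v : totally_umbilic_surface k t U f N lam -> U (u, v) ->
  ex_derive (fun s => lam (s, v)) u.
Proof.
  intros H Hq.
  pose proof (TU_open _ _ _ _ _ _ H) as Ho.
  assert (Lu : locally u (fun s => U (s, v))) by (apply open_line_u; assumption).
  destruct (frame_jets _ _ _ _ _ _ u v H Hq) as [_ [_ [FC [_ [_ [_ [FG _]]]]]]].
  destruct (N_jets _ _ _ _ _ _ u v H Hq) as [NU _].
  destruct (jets _ _ _ _ _ _ u v H Hq) as [J1 _].
  destruct (gram _ _ _ _ _ _ _ H Hq) as [_ [_ Gb]].
  eexists. apply (is_derive_ext_loc (fun s => - dot3 (Nh k t f N (s, v))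
      (fun c => bvh k t f (s, v) c + Omv k t (f (s, v)) (bh k t f (s, v)) (bh k t f (s, v)) c)
      / dot3 (bh k t f (s, v)) (bh k t f (s, v)))).
  2:{ apply is_derive_div.
      - apply isd_opp. apply dot3_derive; [exact NU|]. intros c Hc. apply isd_plus; [exact (FG c Hc)|].
        apply Omv_derive; [exact (dline_weak _ _ _ J1) | exact FC | exact FC].
      - apply dot3_derive; [exact FC | exact FC].
      - cbv beta. apply Rgt_not_eq. assumption. }
  eapply filter_imp; [|exact Lu]. intros s Hs. cbv beta. match goal with |- ?a = ?b => change (@eq R a b) end.
  destruct (hrels _ _ _ _ _ _ s v H Hs) as [_ [_ [_ h4]]].
  destruct (gram _ _ _ _ _ _ _ H Hs) as [_ [_ Gb']].
  cbv zeta in h4. exact (solve_lin _ _ _ h4 Gb').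
Qed.

Lemma solve2 (aa bb ab lu lv X Y : R) :
  aa * bb - ab ^ 2 > 0 ->
  lv * aa - lu * ab - (Y * aa - X * ab) = 0 ->
  lu * bb - lv * ab - (X * bb - Y * ab) = 0 ->
  lu = X /\ lv = Y.
Proof.
  intros Hd E1 E2.
  assert (e1 : (lu - X) * (aa * bb - ab ^ 2) = aa * (lu * bb - lv * ab - (X * bb - Y * ab)) + ab * (lv * aa - lu * ab - (Y * aa - X * ab))) by ring.
  assert (e2 : (lv - Y) * (aa * bb - ab ^ 2) = bb * (lv * aa - lu * ab - (Y * aa - X * ab)) + ab * (lu * bb - lv * ab - (X * bb - Y * ab))) by ring.
  rewrite E1, E2 in e1, e2. rewrite !Rmult_0_r, Rplus_0_r in e1, e2.
  apply Rmult_integral in e1. apply Rmult_integral in e2.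
  destruct e1 as [e1|e1]; [|lra]. destruct e2 as [e2|e2]; [|lra]. lra.
Qed.

Lemma codazzi_pt k t U f N lam u v : totally_umbilic_surface k t U f N lam -> U (u, v) ->
  Derive (fun s => lam (s, v)) u = (k - 4 * t^2) * Nh k t f N (u, v) 2%nat * ah k t f (u, v) 2%nat /\
  Derive (fun s => lam (u, s)) v = (k - 4 * t^2) * Nh k t f N (u, v) 2%nat * bh k t f (u, v) 2%nat.
Proof.
  intros H Hq.
  pose proof (TU_open _ _ _ _ _ _ H) as Ho.
  pose proof (TU_in _ _ _ _ _ _ _ H Hq) as Hm.
  assert (Lu : locally u (fun s => U (s, v))) by (apply open_line_u; assumption).
  assert (Lv : locally v (fun s => U (u, s))) by (apply open_line_v; assumption).
  destruct (frame_jets _ _ _ _ _ _ u v H Hq) as [FA [FB [FC [FD [FE [FF [FG FH]]]]]]].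
  destruct (N_jets _ _ _ _ _ _ u v H Hq) as [NU NV].
  destruct (jets _ _ _ _ _ _ u v H Hq) as [J1 [J2 _]].
  pose proof (Derive_correct _ _ (lam_du _ _ _ _ _ _ u v H Hq)) as LU.
  pose proof (Derive_correct _ _ (lam_dv _ _ _ _ _ _ u v H Hq)) as LV.
  set (lu := Derive (fun s => lam (s, v)) u) in *.
  set (lv := Derive (fun s => lam (u, s)) v) in *.
  assert (D1 := locally_zero_derive _ _ _
    (Phi_derive k t (fun s => lam (u, s)) (fun s => f (u, s)) (fun s => ah k t f (u, s)) (fun s => ah k t f (u, s))
       (fun s => Nh k t f N (u, s)) (fun s => auh k t f (u, s)) (fun s => ah k t f (u, s)) (fun s => ah k t f (u, s))
       lv _ _ _ _ _ _ _ v LV (dline_weak _ _ _ J2) FB FB NV FE FB FB)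
    ltac:(eapply filter_imp; [|exact Lv]; intros s Hs; exact (proj1 (hrels _ _ _ _ _ _ u s H Hs)))).
  assert (D2 := locally_zero_derive _ _ _
    (Phi_derive k t (fun s => lam (s, v)) (fun s => f (s, v)) (fun s => ah k t f (s, v)) (fun s => bh k t f (s, v))
       (fun s => Nh k t f N (s, v)) (fun s => avh k t f (s, v)) (fun s => bh k t f (s, v)) (fun s => ah k t f (s, v))
       lu _ _ _ _ _ _ _ u LU (dline_weak _ _ _ J1) FA FC NU FF FC FA)
    ltac:(eapply filter_imp; [|exact Lu]; intros s Hs; exact (proj1 (proj2 (hrels _ _ _ _ _ _ s v H Hs))))).
  assert (D3 := locally_zero_derive _ _ _
    (Phi_derive k t (fun s => lam (s, v)) (fun s => f (s, v)) (fun s => bh k t f (s, v)) (fun s => bh k t f (s, v))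
       (fun s => Nh k t f N (s, v)) (fun s => bvh k t f (s, v)) (fun s => bh k t f (s, v)) (fun s => bh k t f (s, v))
       lu _ _ _ _ _ _ _ u LU (dline_weak _ _ _ J1) FC FC NU FG FC FC)
    ltac:(eapply filter_imp; [|exact Lu]; intros s Hs; exact (proj2 (proj2 (proj2 (hrels _ _ _ _ _ _ s v H Hs)))))).
  assert (D4 := locally_zero_derive _ _ _
    (Phi_derive k t (fun s => lam (u, s)) (fun s => f (u, s)) (fun s => ah k t f (u, s)) (fun s => bh k t f (u, s))
       (fun s => Nh k t f N (u, s)) (fun s => buh k t f (u, s)) (fun s => ah k t f (u, s)) (fun s => bh k t f (u, s))
       lv _ _ _ _ _ _ _ v LV (dline_weak _ _ _ J2) FB FD NV FH FB FD)
    ltac:(eapply filter_imp; [|exact Lv]; intros s Hs; exact (proj1 (proj2 (proj2 (hrels _ _ _ _ _ _ u s H Hs)))))).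
  cbv beta in D1, D2, D3, D4.
  assert (HT : forall c, avh k t f (u, v) c = buh k t f (u, v) c
     + Omv k t (f (u, v)) (ah k t f (u, v)) (bh k t f (u, v)) c
     - Omv k t (f (u, v)) (bh k t f (u, v)) (ah k t f (u, v)) c).
  { intro c.
    assert (S0 := proj1 (schw _ _ _ _ _ _ u v 0 H Hq ltac:(lia))).
    assert (S1 := proj1 (schw _ _ _ _ _ _ u v 1 H Hq ltac:(lia))).
    assert (S2 := proj1 (schw _ _ _ _ _ _ u v 2 H Hq ltac:(lia))).
    assert (E : buh k t f (u, v) c = dfrv k t (f (u, v)) (fu f (u, v)) (fv f (u, v)) (fuv f (u, v)) c).
    { unfold buh, dfrv. destruct c as [|[|c]]; cbv beta iota zeta; rewrite ?S0, ?S1, ?S2; reflexivity. }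
    rewrite E. unfold avh, ah, bh.
    pose proof (torsion k t (f (u, v)) (fu f (u, v)) (fv f (u, v)) (fuv f (u, v)) c Hm). lra. }
  destruct (frame_orth _ _ _ _ _ _ _ H Hq) as [O1 [O2 _]].
  assert (HD : forall i, (i < 2)%nat -> fu f (u, v) i = Dd k (f (u, v)) * ah k t f (u, v) i /\
                                       fv f (u, v) i = Dd k (f (u, v)) * bh k t f (u, v) i).
  { intros i Hi. unfold in_model in Hm. unfold Dd, ah, bh, frv, Lm.
    destruct i as [|[|i]]; try lia; cbv beta iota; split; field; simpl in Hm |- *; lra. }
  destruct (HD 0%nat ltac:(lia)) as [HA0 HB0]. destruct (HD 1%nat ltac:(lia)) as [HA1 HB1].
  destruct (codazzi_alg k t (f (u, v)) (fu f (u, v)) (fv f (u, v)) (ah k t f (u, v)) (bh k t f (u, v))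
     (Nh k t f N (u, v)) (auh k t f (u, v)) (avh k t f (u, v)) (buh k t f (u, v)) (bvh k t f (u, v))
     (W1 k t f (u, v)) (Z2 k t f (u, v)) (lam (u, v)) lu lv HA0 HA1 HB0 HB1 HT O1 O2 D1 D2 D3 D4) as [E1 E2].
  destruct (gram _ _ _ _ _ _ _ H Hq) as [Gd _].
  apply (solve2 _ _ _ _ _ _ _ Gd).
  - rewrite <- E1. ring.
  - rewrite <- E2. ring.
Qed.

Lemma ct_plus (g h : R * R -> R) x : continuous g x -> continuous h x -> continuous (fun q => g q + h q) x.
Proof. intros; apply (continuous_plus g h); auto. Qed.
Lemma ct_opp (g : R * R -> R) x : continuous g x -> continuous (fun q => - g q) x.
Proof. intros; apply (continuous_opp g); auto. Qed.
Lemma ct_minus (g h : R * R -> R) x : continuous g x -> continuous h x -> continuous (fun q => g q - h q) x.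
Proof. intros; apply ct_plus; [|apply ct_opp]; auto. Qed.
Lemma ct_mult (g h : R * R -> R) x : continuous g x -> continuous h x -> continuous (fun q => g q * h q) x.
Proof. intros; apply (continuous_mult g h); auto. Qed.
Lemma ct_const (c : R) (x : R * R) : continuous (fun _ => c) x.
Proof. apply continuous_const. Qed.
Lemma ct_inv (g : R * R -> R) x : continuous g x -> g x <> 0 -> continuous (fun q => / g q) x.
Proof. intros H1 H2. apply (continuous_comp g (fun y => / y)); [exact H1|]. apply continuous_Rinv; exact H2. Qed.
Lemma ct_div (g h : R * R -> R) x : continuous g x -> continuous h x -> h x <> 0 -> continuous (fun q => g q / h q) x.
Proof. intros; apply ct_mult; [|apply ct_inv]; auto. Qed.
Lemma ct_pow (g : R * R -> R) n x : continuous g x -> continuous (fun q => g q ^ n) x.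
Proof. intro H. induction n as [|n IH]; simpl; [apply ct_const | apply ct_mult; auto]. Qed.
Lemma ct_sqrt (g : R * R -> R) x : continuous g x -> continuous (fun q => sqrt (g q)) x.
Proof. intro H. apply (continuous_comp g sqrt); [exact H|]. apply continuous_sqrt. Qed.

Ltac ctac := repeat match goal with
  | |- continuous (fun _ => ?c) _ => apply ct_const
  | |- continuous (fun q => _ + _) _ => apply ct_plus
  | |- continuous (fun q => _ - _) _ => apply ct_minus
  | |- continuous (fun q => _ * _) _ => apply ct_mult
  | |- continuous (fun q => - _) _ => apply ct_opp
  | |- continuous (fun q => _ / _) _ => apply ct_div
  | |- continuous (fun q => / _) _ => apply ct_inv
  | |- continuous (fun q => _ ^ _) _ => apply ct_pow
  | |- continuous (fun q => sqrt _) _ => apply ct_sqrt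
  | H : continuous ?g ?x |- continuous ?g ?x => exact H
  end.

Lemma fjets_cont k t U f N lam q i : totally_umbilic_surface k t U f N lam -> U q -> (i < 3)%nat ->
  continuous (fun q => f q i) q /\ continuous (fun q => fu f q i) q /\ continuous (fun q => fv f q i) q /\
  continuous (fun q => fuu f q i) q /\ continuous (fun q => fuv f q i) q /\
  continuous (fun q => fvu f q i) q /\ continuous (fun q => fvv f q i) q.
Proof.
  intros H Hq Hi. pose proof (TU_Ck _ _ _ _ _ _ i H Hi) as HC.
  repeat match goal with |- _ /\ _ => split end.
  - exact (proj1 (Ck_reg 2 U _ HC q Hq)).
  - exact (proj1 (Ck_reg 1 U _ (Ck_du 2 U _ HC) q Hq)).
  - exact (proj1 (Ck_reg 1 U _ (Ck_dv 2 U _ HC) q Hq)).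
  - exact (proj1 (Ck_reg 0 U _ (Ck_du 1 U _ (Ck_du 2 U _ HC)) q Hq)).
  - exact (proj1 (Ck_reg 0 U _ (Ck_dv 1 U _ (Ck_du 2 U _ HC)) q Hq)).
  - exact (proj1 (Ck_reg 0 U _ (Ck_du 1 U _ (Ck_dv 2 U _ HC)) q Hq)).
  - exact (proj1 (Ck_reg 0 U _ (Ck_dv 1 U _ (Ck_dv 2 U _ HC)) q Hq)).
Qed.

Ltac get_fjets H Hq :=
  let g0 := fresh "C" in let g1 := fresh "C" in let g2 := fresh "C" in
  destruct (fjets_cont _ _ _ _ _ _ _ 0%nat H Hq ltac:(lia)) as [? [? [? [? [? [? ?]]]]]];
  destruct (fjets_cont _ _ _ _ _ _ _ 1%nat H Hq ltac:(lia)) as [? [? [? [? [? [? ?]]]]]];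
  destruct (fjets_cont _ _ _ _ _ _ _ 2%nat H Hq ltac:(lia)) as [? [? [? [? [? [? ?]]]]]].

Lemma ah_cont k t U f N lam q c : totally_umbilic_surface k t U f N lam -> U q ->
  continuous (fun q => ah k t f q c) q /\ continuous (fun q => bh k t f q c) q /\
  continuous (fun q => auh k t f q c) q /\ continuous (fun q => avh k t f q c) q /\
  continuous (fun q => buh k t f q c) q.
Proof.
  intros H Hq. pose proof (TU_in _ _ _ _ _ _ _ H Hq) as Hm. unfold in_model in Hm.
  get_fjets H Hq.
  unfold ah, bh, auh, avh, buh, frv, dfrv, Lm.
  destruct c as [|[|c]]; cbv beta iota zeta;
  repeat match goal with |- _ /\ _ => split end; ctac; simpl; lra.
Qed.

Lemma par_N (a b N : pt) c : dot3 N a = 0 -> dot3 N b = 0 -> dot3 N N = 1 -> (c < 3)%nat ->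
  cross3 a b c = dot3 N (cross3 a b) * N c.
Proof.
  intros H1 H2 H3 Hc.
  assert (Id : cross3 a b c * dot3 N N - dot3 N (cross3 a b) * N c =
               dot3 N a * cross3 N b c - dot3 N b * cross3 N a c).
  { destruct c as [|[|[|c]]]; try lia; unfold dot3, cross3; simpl; ring. }
  rewrite H1, H2, H3 in Id. lra.
Qed.

Lemma Nm_sq (a b N : pt) : dot3 N a = 0 -> dot3 N b = 0 -> dot3 N N = 1 ->
  (dot3 N (cross3 a b))^2 = dot3 (cross3 a b) (cross3 a b).
Proof.
  intros H1 H2 H3.
  pose proof (par_N a b N 0 H1 H2 H3 ltac:(lia)). pose proof (par_N a b N 1 H1 H2 H3 ltac:(lia)).
  pose proof (par_N a b N 2 H1 H2 H3 ltac:(lia)).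
  set (m := cross3 a b) in *. set (s := dot3 N m) in *.
  unfold dot3 in *. rewrite H, H0, H4. 
  replace ((s * N 0%nat) * (s * N 0%nat) + (s * N 1%nat) * (s * N 1%nat) + (s * N 2%nat) * (s * N 2%nat))
    with (s^2 * (N 0%nat * N 0%nat + N 1%nat * N 1%nat + N 2%nat * N 2%nat)) by ring.
  rewrite H3. ring.
Qed.

Lemma torsion_pt k t U f N lam u v : totally_umbilic_surface k t U f N lam -> U (u, v) ->
  forall c, avh k t f (u, v) c = buh k t f (u, v) c
     + Omv k t (f (u, v)) (ah k t f (u, v)) (bh k t f (u, v)) c
     - Omv k t (f (u, v)) (bh k t f (u, v)) (ah k t f (u, v)) c.
Proof.
  intros H Hq c. pose proof (TU_in _ _ _ _ _ _ _ H Hq) as Hm.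
  assert (S0 := proj1 (schw _ _ _ _ _ _ u v 0 H Hq ltac:(lia))).
  assert (S1 := proj1 (schw _ _ _ _ _ _ u v 1 H Hq ltac:(lia))).
  assert (S2 := proj1 (schw _ _ _ _ _ _ u v 2 H Hq ltac:(lia))).
  assert (E : buh k t f (u, v) c = dfrv k t (f (u, v)) (fu f (u, v)) (fv f (u, v)) (fuv f (u, v)) c).
  { unfold buh, dfrv. destruct c as [|[|c]]; cbv beta iota zeta; rewrite ?S0, ?S1, ?S2; reflexivity. }
  rewrite E. unfold avh, ah, bh.
  pose proof (torsion k t (f (u, v)) (fu f (u, v)) (fv f (u, v)) (fuv f (u, v)) c Hm). lra.
Qed.

Lemma alg_step2 k t (lam : R) (a b N av bu : pt) :
  dot3 N a = 0 -> dot3 N b = 0 -> dot3 N N = 1 -> dot3 (cross3 a b) (cross3 a b) > 0 ->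
  t <> 0 -> k - 4 * t^2 <> 0 -> forall (P : pt),
  av 2%nat = bu 2%nat + Omv k t P a b 2%nat - Omv k t P b a 2%nat ->
  (k - 4 * t^2) * ((lam * a 2%nat - Omv k t P a N 2%nat) * b 2%nat + N 2%nat * bu 2%nat) =
  (k - 4 * t^2) * ((lam * b 2%nat - Omv k t P b N 2%nat) * a 2%nat + N 2%nat * av 2%nat) ->
  3 * (N 2%nat)^2 = 1.
Proof.
  intros H1 H2 H3 Hm Ht Hc P HT E.
  apply Rmult_eq_reg_l in E; [|exact Hc].
  pose proof (par_N a b N 2 H1 H2 H3 ltac:(lia)) as P2.
  pose proof (Nm_sq a b N H1 H2 H3) as Sq.
  set (s := dot3 N (cross3 a b)) in *.
  assert (Hs : s <> 0) by (intro Z; rewrite Z in Sq; lra).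
  assert (X : t * (s - 3 * N 2%nat * cross3 a b 2%nat) = 0).
  { rewrite HT in E. unfold s. unfold Omv, dot3, cross3 in *; simpl in *. lra. }
  rewrite P2 in X.
  assert (Y : t * s * (1 - 3 * N 2%nat ^ 2) = 0) by (rewrite <- X; ring).
  apply Rmult_integral in Y. destruct Y as [Y|Y]; [|lra].
  apply Rmult_integral in Y. destruct Y; contradiction.
Qed.

Definition mh k t f q := cross3 (ah k t f q) (bh k t f q).
Definition sig k t f N q := dot3 (Nh k t f N q) (mh k t f q) / sqrt (dot3 (mh k t f q) (mh k t f q)).

Lemma sig_sq k t U f N lam q : totally_umbilic_surface k t U f N lam -> U q -> sig k t f N q ^ 2 = 1.
Proof.
  intros H Hq. destruct (frame_orth _ _ _ _ _ _ _ H Hq) as [O1 [O2 O3]].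
  pose proof (Nm_sq _ _ _ O1 O2 O3) as Sq. pose proof (cross_pos _ _ _ _ _ _ _ H Hq) as Hp.
  unfold sig, mh.
  set (x := dot3 (Nh k t f N q) (cross3 (ah k t f q) (bh k t f q))) in *.
  set (y := dot3 (cross3 (ah k t f q) (bh k t f q)) (cross3 (ah k t f q) (bh k t f q))) in *.
  assert (Hs : sqrt y <> 0) by (apply Rgt_not_eq, sqrt_lt_R0; lra).
  unfold Rdiv. rewrite Rpow_mult_distr, pow_inv. rewrite <- Rsqr_pow2 with (x := sqrt y).
  rewrite Rsqr_sqrt by lra. rewrite Sq. field. lra.
Qed.

Lemma N_sig k t U f N lam q c : totally_umbilic_surface k t U f N lam -> U q -> (c < 3)%nat ->
  Nh k t f N q c = sig k t f N q * mh k t f q c / sqrt (dot3 (mh k t f q) (mh k t f q)).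
Proof.
  intros H Hq Hc. destruct (frame_orth _ _ _ _ _ _ _ H Hq) as [O1 [O2 O3]].
  pose proof (Nm_sq _ _ _ O1 O2 O3) as Sq. pose proof (cross_pos _ _ _ _ _ _ _ H Hq) as Hp.
  pose proof (par_N _ _ _ c O1 O2 O3 Hc) as Pc.
  unfold sig, mh in *.
  set (x := dot3 (Nh k t f N q) (cross3 (ah k t f q) (bh k t f q))) in *.
  set (y := dot3 (cross3 (ah k t f q) (bh k t f q)) (cross3 (ah k t f q) (bh k t f q))) in *.
  assert (Hs : sqrt y <> 0) by (apply Rgt_not_eq, sqrt_lt_R0; lra).
  assert (Hss : sqrt y * sqrt y = y) by (apply sqrt_sqrt; lra).
  rewrite Pc. unfold Rdiv.
  replace (x * / sqrt y * (x * Nh k t f N q c) * / sqrt y) with (x^2 * Nh k t f N q c * / (sqrt y * sqrt y))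
    by (field; exact Hs).
  rewrite Hss, Sq. field. lra.
Qed.

Lemma cross_derive (a b : R -> pt) da db s0 : dline a s0 da 3 -> dline b s0 db 3 ->
  dline (fun s => cross3 (a s) (b s)) s0 (fun c => cross3 da (b s0) c + cross3 (a s0) db c) 3.
Proof.
  intros Ha Hb c Hc.
  pose proof (Ha 0%nat ltac:(lia)). pose proof (Ha 1%nat ltac:(lia)). pose proof (Ha 2%nat ltac:(lia)).
  pose proof (Hb 0%nat ltac:(lia)). pose proof (Hb 1%nat ltac:(lia)). pose proof (Hb 2%nat ltac:(lia)).
  destruct c as [|[|c]]; unfold cross3; cbv beta iota; (eapply isd_eq; [build|]); cbv beta; ring.
Qed.

Lemma sig_line (Nl ml : R -> pt) dN dm s0 : dline Nl s0 dN 3 -> dline ml s0 dm 3 ->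
  dot3 (ml s0) (ml s0) > 0 ->
  ex_derive (fun s => dot3 (Nl s) (ml s) / sqrt (dot3 (ml s) (ml s))) s0.
Proof.
  intros HN Hm Hp. eexists. apply is_derive_div.
  - apply dot3_derive; eassumption.
  - apply is_derive_sqrt; [apply dot3_derive; eassumption | exact Hp].
  - apply Rgt_not_eq, sqrt_lt_R0. exact Hp.
Qed.

Lemma sig_ex_u k t U f N lam u v : totally_umbilic_surface k t U f N lam -> U (u, v) ->
  ex_derive (fun s => sig k t f N (s, v)) u.
Proof.
  intros H Hq.
  destruct (frame_jets _ _ _ _ _ _ u v H Hq) as [FA [_ [FC _]]].
  destruct (N_jets _ _ _ _ _ _ u v H Hq) as [NU _].
  exact (sig_line _ _ _ _ u NU (cross_derive _ _ _ _ u FA FC) (cross_pos _ _ _ _ _ _ _ H Hq)).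
Qed.

Lemma sig_ex_v k t U f N lam u v : totally_umbilic_surface k t U f N lam -> U (u, v) ->
  ex_derive (fun s => sig k t f N (u, s)) v.
Proof.
  intros H Hq.
  destruct (frame_jets _ _ _ _ _ _ u v H Hq) as [_ [FB [_ [FD _]]]].
  destruct (N_jets _ _ _ _ _ _ u v H Hq) as [_ NV].
  exact (sig_line _ _ _ _ v NV (cross_derive _ _ _ _ v FB FD) (cross_pos _ _ _ _ _ _ _ H Hq)).
Qed.

Lemma sq1_deriv (g : R -> R) (x d : R) : is_derive g x d -> locally x (fun s => g s ^ 2 = 1) -> d = 0.
Proof.
  intros Hd Hl.
  assert (Hx : g x ^ 2 = 1) by exact (locally_singleton _ _ Hl).
  assert (E := locally_zero_derive (fun s => g s * g s - 1) x (d * g x + g x * d - 0)).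
  assert (E' : d * g x + g x * d - 0 = 0).
  { apply E.
    - apply isd_minus; [apply isd_mult; exact Hd | apply isd_const].
    - eapply filter_imp; [|exact Hl]. intros s Hs. simpl in Hs. cbv beta. lra. }
  assert (Hg : g x <> 0) by (intro Z; rewrite Z in Hx; simpl in Hx; lra).
  assert (d * (2 * g x) = 0) by lra.
  apply Rmult_integral in H. destruct H as [H|H]; [exact H | lra].
Qed.

Lemma const_seg (g : R -> R) a b :
  (forall s, Rmin a b <= s <= Rmax a b -> ex_derive g s /\ locally s (fun s' => g s' ^ 2 = 1)) ->
  g a = g b.
Proof.
  intros Hs.
  destruct (MVT_gen g a b (fun _ => 0)) as [c [_ Hc]].
  - intros x Hx. destruct (Hs x ltac:(lra)) as [E L].
    pose proof (Derive_correct _ _ E) as D.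
    rewrite (sq1_deriv g x _ D L) in D. exact D.
  - intros x Hx. destruct (Hs x Hx) as [E _].
    apply continuity_pt_filterlim. exact (ex_derive_continuous g x E).
  - lra.
Qed.

Lemma seg_bound a b s : Rmin a b <= s <= Rmax a b -> Rabs (s - a) <= Rabs (b - a).
Proof.
  unfold Rmin, Rmax. intros H. destruct (Rle_dec a b);
  unfold Rabs; repeat destruct Rcase_abs; lra.
Qed.

Lemma sig_const k t U f N lam u v : totally_umbilic_surface k t U f N lam -> U (u, v) ->
  locally (u, v) (fun q => U q /\ sig k t f N q = sig k t f N (u, v)).
Proof.
  intros H Hq. pose proof (TU_open _ _ _ _ _ _ H) as Ho.
  assert (L2 : locally_2d (fun a b => U (a, b)) u v).
  { apply locally_2d_locally. eapply filter_imp; [|exact (Ho _ Hq)]. intros [a b] Hab; exact Hab. }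
  destruct L2 as [d Hd].
  assert (L3 : locally_2d (fun a b => U (a, b) /\ sig k t f N (a, b) = sig k t f N (u, v)) u v).
  { exists d. intros a b Ha Hb. split; [exact (Hd a b Ha Hb)|].
    transitivity (sig k t f N (u, b)).
    - symmetry. apply (const_seg (fun s => sig k t f N (s, b)) u a).
      intros s Hs. pose proof (seg_bound _ _ _ Hs) as Hb'.
      assert (Us : U (s, b)) by (apply Hd; lra).
      split; [exact (sig_ex_u _ _ _ _ _ _ s b H Us)|].
      eapply filter_imp; [|exact (open_line_u U s b Ho Us)]. intros s' Hs'.
      exact (sig_sq _ _ _ _ _ _ _ H Hs').
    - symmetry. apply (const_seg (fun s => sig k t f N (u, s)) v b).
      intros s Hs. pose proof (seg_bound _ _ _ Hs) as Hb'.
      assert (Us : U (u, s)) by (apply Hd; [rewrite Rminus_eq_0, Rabs_R0; apply cond_pos | lra]).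
      split; [exact (sig_ex_v _ _ _ _ _ _ u s H Us)|].
      eapply filter_imp; [|exact (open_line_v U u s Ho Us)]. intros s' Hs'.
      exact (sig_sq _ _ _ _ _ _ _ H Hs'). }
  apply locally_2d_locally in L3. eapply filter_imp; [|exact L3]. intros [a b] Hab; exact Hab.
Qed.

Lemma N_cont k t U f N lam u v c : totally_umbilic_surface k t U f N lam -> U (u, v) -> (c < 3)%nat ->
  continuous (fun q => Nh k t f N q c) (u, v).
Proof.
  intros H Hq Hc.
  apply (continuous_ext_loc _ (fun q => sig k t f N (u, v) * mh k t f q c / sqrt (dot3 (mh k t f q) (mh k t f q)))).
  - eapply filter_imp; [|exact (sig_const _ _ _ _ _ _ u v H Hq)]. intros q [Uq Sq].
    rewrite (N_sig _ _ _ _ _ _ q c H Uq Hc). rewrite Sq. reflexivity.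
  - pose proof (cross_pos _ _ _ _ _ _ _ H Hq) as Hp.
    destruct (ah_cont _ _ _ _ _ _ (u, v) 0 H Hq) as [A0 [B0 _]].
    destruct (ah_cont _ _ _ _ _ _ (u, v) 1 H Hq) as [A1 [B1 _]].
    destruct (ah_cont _ _ _ _ _ _ (u, v) 2 H Hq) as [A2 [B2 _]].
    apply ct_div.
    + unfold mh, cross3. destruct c as [|[|c]]; cbv beta iota; ctac.
    + apply ct_sqrt. unfold mh, cross3, dot3. cbv beta iota. ctac.
    + apply Rgt_not_eq, sqrt_lt_R0. exact Hp.
Qed.

Lemma lam_cont k t U f N lam u v : totally_umbilic_surface k t U f N lam -> U (u, v) ->
  continuous lam (u, v).
Proof.
  intros H Hq. pose proof (TU_open _ _ _ _ _ _ H) as Ho.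
  apply (continuous_ext_loc _ (fun q => - dot3 (Nh k t f N q)
      (fun c => auh k t f q c + Omv k t (f q) (ah k t f q) (ah k t f q) c) / dot3 (ah k t f q) (ah k t f q))).
  - eapply filter_imp; [|exact (Ho _ Hq)]. intros [a b] Uq.
    destruct (hrels _ _ _ _ _ _ a b H Uq) as [h1 _].
    destruct (gram _ _ _ _ _ _ _ H Uq) as [_ [Ga _]].
    cbv zeta in h1. exact (solve_lin _ _ _ h1 Ga).
  - destruct (gram _ _ _ _ _ _ _ H Hq) as [_ [Ga _]].
    destruct (ah_cont _ _ _ _ _ _ (u, v) 0 H Hq) as [A0 [_ [AU0 _]]].
    destruct (ah_cont _ _ _ _ _ _ (u, v) 1 H Hq) as [A1 [_ [AU1 _]]].
    destruct (ah_cont _ _ _ _ _ _ (u, v) 2 H Hq) as [A2 [_ [AU2 _]]].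
    pose proof (N_cont _ _ _ _ _ _ u v 0 H Hq ltac:(lia)) as N0.
    pose proof (N_cont _ _ _ _ _ _ u v 1 H Hq ltac:(lia)) as N1.
    pose proof (N_cont _ _ _ _ _ _ u v 2 H Hq ltac:(lia)) as N2.
    destruct (fjets_cont _ _ _ _ _ _ _ 0%nat H Hq ltac:(lia)) as [F0 _].
    destruct (fjets_cont _ _ _ _ _ _ _ 1%nat H Hq ltac:(lia)) as [F1 _].
    apply ct_div; [| |apply Rgt_not_eq; exact Ga].
    + unfold dot3, Omv, rho. cbv beta iota. ctac.
    + unfold dot3. ctac.
Qed.

Lemma mixed_u k t U f N lam a b : totally_umbilic_surface k t U f N lam -> U (a, b) ->
  is_derive (fun z => Derive (fun s => lam (z, s)) b) a
    ((k - 4 * t^2) * (Nuh k t f N lam (a, b) 2%nat * bh k t f (a, b) 2%nat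
                      + Nh k t f N (a, b) 2%nat * buh k t f (a, b) 2%nat)).
Proof.
  intros H Hq. pose proof (TU_open _ _ _ _ _ _ H) as Ho.
  apply (is_derive_ext_loc (fun z => (k - 4 * t^2) * Nh k t f N (z, b) 2%nat * bh k t f (z, b) 2%nat)).
  - eapply filter_imp; [|exact (open_line_u U a b Ho Hq)]. intros z Hz.
    symmetry. exact (proj2 (codazzi_pt _ _ _ _ _ _ z b H Hz)).
  - destruct (frame_jets _ _ _ _ _ _ a b H Hq) as [_ [_ [FC _]]].
    destruct (N_jets _ _ _ _ _ _ a b H Hq) as [NU _].
    pose proof (FC 2%nat ltac:(lia)). pose proof (NU 2%nat ltac:(lia)).
    eapply isd_eq; [build|]. cbv beta. change (AbsRing.sort R_AbsRing) with R. ring.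
Qed.

Lemma mixed_v k t U f N lam a b : totally_umbilic_surface k t U f N lam -> U (a, b) ->
  is_derive (fun z => Derive (fun s => lam (s, z)) a) b
    ((k - 4 * t^2) * (Nvh k t f N lam (a, b) 2%nat * ah k t f (a, b) 2%nat
                      + Nh k t f N (a, b) 2%nat * avh k t f (a, b) 2%nat)).
Proof.
  intros H Hq. pose proof (TU_open _ _ _ _ _ _ H) as Ho.
  apply (is_derive_ext_loc (fun z => (k - 4 * t^2) * Nh k t f N (a, z) 2%nat * ah k t f (a, z) 2%nat)).
  - eapply filter_imp; [|exact (open_line_v U a b Ho Hq)]. intros z Hz.
    symmetry. exact (proj1 (codazzi_pt _ _ _ _ _ _ a z H Hz)).
  - destruct (frame_jets _ _ _ _ _ _ a b H Hq) as [_ [FB _]].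
    destruct (N_jets _ _ _ _ _ _ a b H Hq) as [_ NV].
    pose proof (FB 2%nat ltac:(lia)). pose proof (NV 2%nat ltac:(lia)).
    eapply isd_eq; [build|]. cbv beta. change (AbsRing.sort R_AbsRing) with R. ring.
Qed.

Lemma G_cont k t U f N lam u v : totally_umbilic_surface k t U f N lam -> U (u, v) ->
  continuous (fun q => (k - 4 * t^2) * (Nuh k t f N lam q 2%nat * bh k t f q 2%nat
                      + Nh k t f N q 2%nat * buh k t f q 2%nat)) (u, v) /\
  continuous (fun q => (k - 4 * t^2) * (Nvh k t f N lam q 2%nat * ah k t f q 2%nat
                      + Nh k t f N q 2%nat * avh k t f q 2%nat)) (u, v).
Proof.
  intros H Hq.
  assert (LC : continuous (fun q => lam q) (u, v)) by exact (lam_cont _ _ _ _ _ _ u v H Hq).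
  destruct (ah_cont _ _ _ _ _ _ (u, v) 0 H Hq) as [A0 [B0 _]].
  destruct (ah_cont _ _ _ _ _ _ (u, v) 1 H Hq) as [A1 [B1 _]].
  destruct (ah_cont _ _ _ _ _ _ (u, v) 2 H Hq) as [A2 [B2 [_ [AV2 BU2]]]].
  pose proof (N_cont _ _ _ _ _ _ u v 0 H Hq ltac:(lia)) as N0.
  pose proof (N_cont _ _ _ _ _ _ u v 1 H Hq ltac:(lia)) as N1.
  pose proof (N_cont _ _ _ _ _ _ u v 2 H Hq ltac:(lia)) as N2.
  unfold Nuh, Nvh, Omv. cbv beta iota. split; ctac.
Qed.

Lemma step2 k t U f N lam u v : totally_umbilic_surface k t U f N lam -> U (u, v) ->
  t <> 0 -> k - 4 * t^2 <> 0 -> 3 * (Nh k t f N (u, v) 2%nat)^2 = 1.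
Proof.
  intros H Hq Ht Hc. pose proof (TU_open _ _ _ _ _ _ H) as Ho.
  assert (Loc : locally (u, v) U) by exact (Ho _ Hq).
  destruct (G_cont _ _ _ _ _ _ u v H Hq) as [GC1 GC2].
  assert (E0 : Derive (fun z => Derive (fun s => lam (z, s)) v) u =
               Derive (fun z => Derive (fun s => lam (s, z)) u) v).
  { apply (Schwarz (fun a b => lam (a, b)) u v).
    - apply locally_2d_locally. eapply filter_imp; [|exact Loc]. intros [a b] Hab. simpl.
      repeat match goal with |- _ /\ _ => split end.
      + exact (lam_du _ _ _ _ _ _ a b H Hab).
      + exact (lam_dv _ _ _ _ _ _ a b H Hab).
      + eexists. exact (mixed_u _ _ _ _ _ _ a b H Hab).
      + eexists. exact (mixed_v _ _ _ _ _ _ a b H Hab).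
    - apply (cont2d (fun q => Derive (fun z => Derive (fun s => lam (z, s)) (snd q)) (fst q))).
      apply (continuous_ext_loc _ (fun q => (k - 4 * t^2) * (Nuh k t f N lam q 2%nat * bh k t f q 2%nat
                      + Nh k t f N q 2%nat * buh k t f q 2%nat))); [|exact GC1].
      eapply filter_imp; [|exact Loc]; intros [a b] Hab.
      exact (eq_sym (is_derive_unique _ _ _ (mixed_u _ _ _ _ _ _ a b H Hab))).
    - apply (cont2d (fun q => Derive (fun z => Derive (fun s => lam (s, z)) (fst q)) (snd q))).
      apply (continuous_ext_loc _ (fun q => (k - 4 * t^2) * (Nvh k t f N lam q 2%nat * ah k t f q 2%nat
                      + Nh k t f N q 2%nat * avh k t f q 2%nat))); [|exact GC2].
      eapply filter_imp; [|exact Loc]; intros [a b] Hab.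
      exact (eq_sym (is_derive_unique _ _ _ (mixed_v _ _ _ _ _ _ a b H Hab))). }
  pose proof (is_derive_unique _ _ _ (mixed_u _ _ _ _ _ _ u v H Hq)) as M1.
  pose proof (is_derive_unique _ _ _ (mixed_v _ _ _ _ _ _ u v H Hq)) as M2.
  assert (Eq := eq_trans (eq_sym M1) (eq_trans E0 M2)).
  destruct (frame_orth _ _ _ _ _ _ _ H Hq) as [O1 [O2 O3]].
  pose proof (cross_pos _ _ _ _ _ _ _ H Hq) as Hp.
  pose proof (torsion_pt _ _ _ _ _ _ u v H Hq 2%nat) as HT.
  unfold Nuh, Nvh in Eq.
  exact (alg_step2 k t (lam (u, v)) (ah k t f (u, v)) (bh k t f (u, v)) (Nh k t f N (u, v))
           (avh k t f (u, v)) (buh k t f (u, v)) O1 O2 O3 Hp Ht Hc (f (u, v)) HT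
           ltac:(change (AbsRing.sort R_AbsRing) with R in *; lra)).
Qed.

Lemma sqc_deriv (g : R -> R) (x d c : R) : is_derive g x d -> locally x (fun s => g s ^ 2 = c) -> c <> 0 -> d = 0.
Proof.
  intros Hd Hl Hc.
  assert (Hx : g x ^ 2 = c) by exact (locally_singleton _ _ Hl).
  assert (E := locally_zero_derive (fun s => g s * g s - c) x (d * g x + g x * d - 0)).
  assert (E' : d * g x + g x * d - 0 = 0).
  { apply E.
    - apply isd_minus; [apply isd_mult; exact Hd | apply isd_const].
    - eapply filter_imp; [|exact Hl]. intros s Hs. simpl in Hs. cbv beta. lra. }
  assert (Hg : g x <> 0) by (intro Z; rewrite Z in Hx; simpl in Hx; lra).
  assert (d * (2 * g x) = 0) by lra.
  apply Rmult_integral in H. destruct H as [H|H]; [exact H | lra].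
Qed.

Lemma final_alg k t (lam : R) (P a b N : pt) :
  dot3 N a = 0 -> dot3 N b = 0 -> dot3 N N = 1 -> dot3 (cross3 a b) (cross3 a b) > 0 -> t <> 0 ->
  3 * N 2%nat ^ 2 = 1 ->
  lam * a 2%nat - Omv k t P a N 2%nat = 0 -> lam * b 2%nat - Omv k t P b N 2%nat = 0 -> False.
Proof.
  intros O1 O2 O3 Hm Ht H3 Wa Wb.
  set (m := cross3 a b) in *.
  set (w := v3 (- (t * N 1%nat)) (t * N 0%nat) lam).
  assert (wa : dot3 w a = 0) by (unfold w, v3, dot3; unfold Omv in Wa; simpl in *; lra).
  assert (wb : dot3 w b = 0) by (unfold w, v3, dot3; unfold Omv in Wb; simpl in *; lra).
  assert (Id : forall (z : pt) c, (c < 3)%nat -> dot3 m m * z c - dot3 z m * m c =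
      dot3 z b * cross3 m a c - dot3 z a * cross3 m b c).
  { intros z c Hc. unfold m. destruct c as [|[|[|c]]]; try lia; unfold dot3, cross3; simpl; ring. }
  set (M := dot3 m m) in *.
  assert (W0 := Id w 0%nat ltac:(lia)). assert (W1 := Id w 1%nat ltac:(lia)).
  assert (N0 := Id N 0%nat ltac:(lia)). assert (N1 := Id N 1%nat ltac:(lia)).
  rewrite wa, wb in W0, W1. rewrite O1, O2 in N0, N1.
  assert (K : M * M * (w 0%nat * N 1%nat - w 1%nat * N 0%nat) = 0).
  { replace (M * M * (w 0%nat * N 1%nat - w 1%nat * N 0%nat)) with
      ((M * w 0%nat) * (M * N 1%nat) - (M * w 1%nat) * (M * N 0%nat)) by ring.
    replace (M * w 0%nat) with (dot3 w m * m 0%nat) by lra.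
    replace (M * w 1%nat) with (dot3 w m * m 1%nat) by lra.
    replace (M * N 1%nat) with (dot3 N m * m 1%nat) by lra.
    replace (M * N 0%nat) with (dot3 N m * m 0%nat) by lra. ring. }
  assert (HM : M * M <> 0) by (apply Rmult_integral_contrapositive; split; lra).
  apply Rmult_integral in K. destruct K as [K|K]; [contradiction|].
  unfold w, v3 in K. simpl in K.
  assert (K2 : t * (N 0%nat * N 0%nat + N 1%nat * N 1%nat) = 0) by lra.
  apply Rmult_integral in K2. destruct K2 as [K2|K2]; [contradiction|].
  unfold dot3 in O3. simpl in H3. nra.
Qed.

Lemma no_TU k t U f N lam : t <> 0 -> k - 4 * t ^ 2 <> 0 -> ~ totally_umbilic_surface k t U f N lam.
Proof.
  intros Ht Hc H.
  assert (Hex : exists q, U q) by apply H.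
  destruct Hex as [[u v] Hq].
  pose proof (TU_open _ _ _ _ _ _ H) as Ho.
  assert (S3 : forall a b, U (a, b) -> Nh k t f N (a, b) 2%nat ^ 2 = 1/3).
  { intros a b Hab. pose proof (step2 _ _ _ _ _ _ a b H Hab Ht Hc). lra. }
  destruct (N_jets _ _ _ _ _ _ u v H Hq) as [NU NV].
  assert (Du := sqc_deriv _ _ _ (1/3) (NU 2%nat ltac:(lia))
     ltac:(eapply filter_imp; [|exact (open_line_u U u v Ho Hq)]; intros s Hs; exact (S3 s v Hs)) ltac:(lra)).
  assert (Dv := sqc_deriv _ _ _ (1/3) (NV 2%nat ltac:(lia))
     ltac:(eapply filter_imp; [|exact (open_line_v U u v Ho Hq)]; intros s Hs; exact (S3 u s Hs)) ltac:(lra)).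
  unfold Nuh, Nvh in Du, Dv.
  destruct (frame_orth _ _ _ _ _ _ _ H Hq) as [O1 [O2 O3]].
  pose proof (cross_pos _ _ _ _ _ _ _ H Hq) as Hp.
  pose proof (step2 _ _ _ _ _ _ u v H Hq Ht Hc) as T3.
  exact (final_alg k t (lam (u, v)) (f (u, v)) _ _ _ O1 O2 O3 Hp Ht T3 Du Dv).
Qed.

Theorem theorem2p1 (kappa tau : R) :
  tau <> 0 -> kappa - 4 * tau ^ 2 <> 0 ->
  (forall (U : R * R -> Prop) (f N : R * R -> pt) (lam : R * R -> R),
     ~ totally_umbilic_surface kappa tau U f N lam) /\
  (forall (U : R * R -> Prop) (f N : R * R -> pt),
     ~ totally_geodesic_surface kappa tau U f N).
Proof.
  intros Ht Hc. split.
  - intros U f N lam. exact (no_TU kappa tau U f N lam Ht Hc).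
  - intros U f N. exact (no_TU kappa tau U f N (fun _ => 0) Ht Hc).
Qed.
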